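(* Let $\Gamma$ be a cycle graph (a connected metric graph all of whose vertices have degree two) whose edge lengths are natural numbers $L(e)$, $e\in\mathcal E$, with $\gcd\{L(e):e\in\mathcal E\}=1$ and with $\widetilde E:=\sum_{e\in\mathcal E}L(e)$ odd. Then $$\lambda_{\widetilde E+1}\big(L^{\rm st}(\Gamma)\big)>\lambda_{\widetilde E}\big(L^{\rm D}(\Gamma)\big),$$ i.e. the inequality $\lambda_{n+1}(L^{\rm st}(\Gamma))\le\lambda_n(L^{\rm D}(\Gamma))$ fails for $n=\widetilde E$.
   Context: A finite compact metric graph $\Gamma$ consists of finitely many edges $e_n=[x_{2n-1},x_{2n}]\subset\mathbb R$ of positive lengths $L(e_n)$ and a vertex set $\mathcal V$ which is a partition of the set of all edge endpoints; $\mathcal E$ is the edge set; the degree of a vertex is the number of endpoints it contains. $f(x_j)$ denotes the limit of $f$ at endpoint $x_j$, and $\partial f(x_j)=f'(x_j)$ if $x_j$ is a left endpoint, $-f'(x_j)$ if a right endpoint. The standard Laplacian $L^{\rm st}(\Gamma)$ acts as $-f''$ on each edge with domain all $f\in W^2_2(\Gamma\setminus\mathcal V)=\bigoplus_nW^2_2(e_n)$ with, at every vertex $v$, $f(x_i)=f(x_j)$ for $x_i,x_j\in v$ and $\sum_{x_j\in v}\partial f(x_j)=0$. The Dirichlet Laplacian $L^{\rm D}(\Gamma)$ acts as $-f''$ with domain all $f\in W^2_2(\Gamma\setminus\mathcal V)$ with $f(x_j)=0$ at every endpoint $x_j$. Eigenvalues $\lambda_1\le\lambda_2\le\dots$ are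 counted with multiplicities. *)

(* Defs.v *)
From Stdlib Require Import Reals Lra Lia Arith List.
From Stdlib Require Import Relations.Relation_Operators.
Open Scope R_scope.

(** * Finite compact metric graphs
   A metric graph with [N] edges e_0, ..., e_(N-1); edge [n] is the interval
   [0, Lg n] (a translate of the paper's [x_(2n-1), x_(2n)]).
   Endpoints are indexed by [j < 2N]: endpoint [2n] is the left endpoint of
   edge [n] (position 0), endpoint [2n+1] its right endpoint (position Lg n).
   The vertex set is the partition of endpoints induced by a labelling
   [V : nat -> nat]: endpoints j, k lie in the same vertex iff V j = V k. *)

Fixpoint rsum (n : nat) (g : nat -> R) : R :=
  match n with O => 0 | S m => rsum m g + g m end.

Definition ep_edge (j : nat) : nat := Nat.div j 2.
Definition ep_pos (Lg : nat -> R) (j : nat) : R :=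
  if Nat.even j then 0 else Lg (Nat.div j 2).

Definition degree (N : nat) (V : nat -> nat) (j : nat) : nat :=
  length (filter (fun k => Nat.eqb (V k) (V j)) (seq 0 (2 * N))).

Definition ep_step (N : nat) (V : nat -> nat) (j k : nat) : Prop :=
  (j < 2 * N)%nat /\ (k < 2 * N)%nat /\ (ep_edge j = ep_edge k \/ V j = V k).

Definition connected_graph (N : nat) (V : nat -> nat) : Prop :=
  forall j k, (j < 2 * N)%nat -> (k < 2 * N)%nat ->
    clos_refl_trans nat (ep_step N V) j k.

Definition cycle_graph (N : nat) (V : nat -> nat) : Prop :=
  (1 <= N)%nat /\ connected_graph N V /\
  forall j, (j < 2 * N)%nat -> degree N V j = 2%nat.

(** Functions on the graph: [f n] is the function on edge [n]. *)
(* boundary value f(x_j) and normal derivative ∂f(x_j) *)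
Definition bval (Lg : nat -> R) (f : nat -> R -> R) (j : nat) : R :=
  f (ep_edge j) (ep_pos Lg j).
Definition bder (Lg : nat -> R) (df : nat -> R -> R) (j : nat) : R :=
  if Nat.even j then df (ep_edge j) 0 else - df (ep_edge j) (Lg (ep_edge j)).

Definition standard_cond (N : nat) (Lg : nat -> R) (V : nat -> nat)
  (f df : nat -> R -> R) : Prop :=
  (forall j k, (j < 2 * N)%nat -> (k < 2 * N)%nat -> V j = V k ->
      bval Lg f j = bval Lg f k) /\
  (forall j, (j < 2 * N)%nat ->
      rsum (2 * N) (fun k => if Nat.eqb (V k) (V j) then bder Lg df k else 0) = 0).

Definition dirichlet_cond (N : nat) (Lg : nat -> R) (V : nat -> nat)
  (f df : nat -> R -> R) : Prop :=
  forall j, (j < 2 * N)%nat -> bval Lg f j = 0.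

Definition BCond := (nat -> R -> R) -> (nat -> R -> R) -> Prop.

(* eigenfunction: on each edge, f is (the restriction of) a C^2 function with
   derivatives df, ddf, solving -f'' = lam f inside the edge, and f satisfies
   the vertex conditions.  (Any W^2_2 solution of -f''=lam f on an interval is
   a trigonometric/linear function, hence of this form.) *)
Definition eigenfun (N : nat) (Lg : nat -> R) (BC : BCond) (lam : R)
  (f df ddf : nat -> R -> R) : Prop :=
  (forall n x, derivable_pt_lim (f n) x (df n x) /\
               derivable_pt_lim (df n) x (ddf n x)) /\
  (forall n x, (n < N)%nat -> 0 < x < Lg n -> - ddf n x = lam * f n x) /\
  BC f df.

(* there are k linearly independent (as functions on the graph) eigenfunctions
   with eigenvalues <= lam, i.e. the number of eigenvalues <= lam counted with
   multiplicity is at least k *)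
Definition count_ge (N : nat) (Lg : nat -> R) (BC : BCond) (lam : R) (k : nat) : Prop :=
  exists (lams : nat -> R) (fs dfs ddfs : nat -> nat -> R -> R),
    (forall i, (i < k)%nat -> lams i <= lam /\
        eigenfun N Lg BC (lams i) (fs i) (dfs i) (ddfs i)) /\
    (forall c : nat -> R,
        (forall n x, (n < N)%nat -> 0 <= x <= Lg n ->
           rsum k (fun i => c i * fs i n x) = 0) ->
        forall i, (i < k)%nat -> c i = 0).

(* lam is the n-th eigenvalue (n >= 1), eigenvalues counted with multiplicity
   in nondecreasing order *)
Definition is_nth_eigenvalue (N : nat) (Lg : nat -> R) (BC : BCond)
  (n : nat) (lam : R) : Prop :=
  count_ge N Lg BC lam n /\ forall mu, mu < lam -> ~ count_ge N Lg BC mu n.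

Fixpoint tot_len (n : nat) (g : nat -> nat) : nat :=
  match n with O => O | S m => (tot_len m g + g m)%nat end.
Fixpoint gcd_all (n : nat) (g : nat -> nat) : nat :=
  match n with O => O | S m => Nat.gcd (gcd_all m g) (g m) end.

(* Main.v *)
From Stdlib Require Import Reals Lra Lia Arith List Classical Permutation ZArith ClassicalEpsilon.
From Stdlib Require Import Relations.Relation_Operators Relations.Operators_Properties.
From Coquelicot Require Import Coquelicot.
Require Import Defs.
Open Scope R_scope.

Lemma rsum_ext n f g : (forall i, (i < n)%nat -> f i = g i) -> rsum n f = rsum n g.
Proof.
  induction n; simpl; intros H; [reflexivity|].
  rewrite IHn by (intros; apply H; lia). rewrite H by lia. reflexivity.
Qed.

Lemma rsum_plus n f g : rsum n (fun i => f i + g i) = rsum n f + rsum n g.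
Proof. induction n; simpl; [lra|]. rewrite IHn; lra. Qed.

Lemma rsum_scal n c f : rsum n (fun i => c * f i) = c * rsum n f.
Proof. induction n; simpl; [lra|]. rewrite IHn; lra. Qed.

Lemma rsum_zero n f : (forall i, (i < n)%nat -> f i = 0) -> rsum n f = 0.
Proof.
  intros H. rewrite (rsum_ext n f (fun _ => 0)) by (intros; apply H; auto).
  clear H. induction n; simpl; [lra|]. rewrite IHn; lra.
Qed.

Lemma rsum_ind n a g : (a < n)%nat -> rsum n (fun i => if Nat.eqb i a then g i else 0) = g a.
Proof.
  induction n; intros Ha; [lia|]. simpl.
  destruct (Nat.eq_dec a n) as [->|Hne].
  - rewrite Nat.eqb_refl. rewrite rsum_zero; [lra|]. intros i Hi.
    destruct (Nat.eqb_spec i n); [lia|reflexivity].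
  - rewrite IHn by lia. destruct (Nat.eqb_spec n a); [lia|lra].
Qed.

Definition lsum {X : Type} (L : list X) (g : X -> R) : R :=
  fold_right (fun x acc => g x + acc) 0 L.

Lemma lsum_zero {X} (L : list X) g : (forall x, In x L -> g x = 0) -> lsum L g = 0.
Proof. induction L; simpl; intros H; [lra|]. rewrite H by auto. rewrite IHL by auto. lra. Qed.

Lemma rsum_lsum {X} k (L : list X) (c : nat -> R) (a : nat -> X -> R) (h : X -> R) :
  rsum k (fun i => c i * lsum L (fun y => a i y * h y)) =
  lsum L (fun y => rsum k (fun i => c i * a i y) * h y).
Proof.
  induction k; simpl.
  - induction L; simpl; [lra|]. rewrite <- IHL. lra.
  - rewrite IHk. clear IHk. induction L; simpl; [lra|]. rewrite <- IHL. lra.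
Qed.

Lemma steinitz {X} (eqd : forall x y : X, {x = y} + {x <> y}) :
  forall n (L : list X) k (a : nat -> X -> R), length L = n -> (n < k)%nat ->
  exists c : nat -> R, (exists i, (i < k)%nat /\ c i <> 0) /\
    forall x, In x L -> rsum k (fun i => c i * a i x) = 0.
Proof.
  induction n as [n IH] using lt_wf_ind.
  intros L k a HL Hk. destruct k as [|k']; [lia|].
  destruct (classic (exists x, In x L /\ a k' x <> 0)) as [[x0 [Hx0 Ha0]]|Hno].
  - set (L' := remove eqd x0 L).
    assert (HL' : (length L' < n)%nat) by (subst; apply remove_length_lt; auto).
    set (b := fun i x => a i x - a i x0 / a k' x0 * a k' x).
    destruct (IH (length L') HL' L' k' b eq_refl ltac:(lia)) as [c' [[i [Hi Hci]] Hc']].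
    exists (fun i => if Nat.ltb i k' then c' i else - (rsum k' (fun i => c' i * a i x0)) / a k' x0).
    split.
    + exists i. split; [lia|]. destruct (Nat.ltb_spec i k'); [auto|lia].
    + intros x Hx. simpl. destruct (Nat.ltb_spec k' k'); [lia|].
      rewrite (rsum_ext k' _ (fun i => c' i * a i x)) by (intros j Hj; destruct (Nat.ltb_spec j k'); [auto|lia]).
      destruct (eqd x x0) as [->|Hne].
      * field. auto.
      * assert (Hin : In x L') by (apply in_in_remove; auto).
        specialize (Hc' x Hin). unfold b in Hc'.
        rewrite (rsum_ext k' _ (fun i => c' i * a i x + (- (a k' x / a k' x0)) * (c' i * a i x0))) in Hc'
          by (intros; field; auto).
        rewrite rsum_plus, rsum_scal in Hc'. rewrite <- Hc'. unfold Rdiv. ring.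
  - exists (fun i => if Nat.eqb i k' then 1 else 0). split.
    + exists k'. split; [lia|]. rewrite Nat.eqb_refl. lra.
    + intros x Hx. simpl. rewrite Nat.eqb_refl.
      rewrite rsum_zero.
      * assert (a k' x = 0) by (apply NNPP; intro; apply Hno; eauto). rewrite H; lra.
      * intros i Hi. destruct (Nat.eqb_spec i k'); [lia|lra].
Qed.

Lemma lsum_plus {X} (L : list X) f g : lsum L (fun y => f y + g y) = lsum L f + lsum L g.
Proof. induction L; simpl; [lra|]. rewrite IHL. lra. Qed.

Lemma lsum_scal {X} (L : list X) c f : lsum L (fun y => c * f y) = c * lsum L f.
Proof. induction L; simpl; [lra|]. rewrite IHL. lra. Qed.

Lemma lsum_ext {X} (L : list X) f g : (forall y, In y L -> f y = g y) -> lsum L f = lsum L g.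
Proof. induction L; simpl; intros H; [lra|]. rewrite H, IHL by auto. lra. Qed.

Lemma lsum_pick {X} (eqd : forall x y : X, {x = y} + {x <> y}) (L : list X) y0 :
  In y0 L -> exists a : X -> R, forall h, lsum L (fun y => a y * h y) = h y0.
Proof.
  intros Hin. set (m := count_occ eqd L y0).
  assert (Hm : (0 < m)%nat) by (apply count_occ_In; auto).
  exists (fun y => if eqd y y0 then / INR m else 0). intros h.
  assert (Hg : forall L', lsum L' (fun y => (if eqd y y0 then / INR m else 0) * h y)
     = INR (count_occ eqd L' y0) * / INR m * h y0).
  { induction L' as [|z L' IH]; simpl; [lra|]. rewrite IH.
    destruct (eqd z y0) as [->|Hne]; [rewrite S_INR; lra|lra]. }
  rewrite Hg. fold m. field. apply not_0_INR. lia.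
Qed.

Lemma lsum_combo2 {X} (eqd : forall x y : X, {x = y} + {x <> y}) (L : list X) y1 y2 A B :
  In y1 L -> In y2 L -> exists a : X -> R, forall h, lsum L (fun y => a y * h y) = A * h y1 + B * h y2.
Proof.
  intros H1 H2. destruct (lsum_pick eqd L y1 H1) as [a1 Ha1].
  destruct (lsum_pick eqd L y2 H2) as [a2 Ha2].
  exists (fun y => A * a1 y + B * a2 y). intros h.
  rewrite (lsum_ext L _ (fun y => A * (a1 y * h y) + B * (a2 y * h y))) by (intros; ring).
  rewrite lsum_plus, !lsum_scal, Ha1, Ha2. reflexivity.
Qed.

Lemma span_dep {X} (eqd : forall x y : X, {x = y} + {x <> y}) (L : list X) k
  (v : nat -> nat -> R -> R) (g : X -> nat -> R -> R) (a : nat -> X -> R) (D : nat -> R -> Prop) :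
  (length L < k)%nat ->
  (forall i n x, (i < k)%nat -> D n x -> v i n x = lsum L (fun y => a i y * g y n x)) ->
  exists c : nat -> R, (exists i, (i < k)%nat /\ c i <> 0) /\
    forall n x, D n x -> rsum k (fun i => c i * v i n x) = 0.
Proof.
  intros Hk Hv. destruct (steinitz eqd (length L) L k a eq_refl Hk) as [c [Hc Hc0]].
  exists c. split; auto. intros n x Hd.
  rewrite (rsum_ext k _ (fun i => c i * lsum L (fun y => a i y * g y n x))) by (intros; rewrite Hv; auto).
  rewrite rsum_lsum. apply lsum_zero. intros y Hy. rewrite Hc0 by auto. lra.
Qed.

Open Scope nat_scope.

Definition eflip (j : nat) : nat := if Nat.even j then S j else pred j.

Definition partner (N : nat) (V : nat -> nat) (j : nat) : nat :=
  match filter (fun k => Nat.eqb (V k) (V j)) (seq 0 (2 * N)) with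
  | a :: b :: _ => if Nat.eqb a j then b else a
  | _ => j end.

Definition Tstep N V j := partner N V (eflip j).
Definition walk N V t := Nat.iter t (Tstep N V) 0.

Lemma d2a q : Nat.div (2 * q) 2 = q.
Proof. rewrite Nat.mul_comm, Nat.div_mul; lia. Qed.
Lemma d2b q : Nat.div (2 * q + 1) 2 = q.
Proof. replace (2 * q + 1) with (1 + q * 2) by lia. rewrite Nat.div_add by lia. simpl. lia. Qed.
Lemma eva q : Nat.even (2 * q) = true.
Proof. rewrite Nat.even_mul. reflexivity. Qed.
Lemma evb q : Nat.even (2 * q + 1) = false.
Proof. rewrite Nat.even_add, Nat.even_mul. reflexivity. Qed.

Lemma eo_cases j : (exists q, j = 2 * q) \/ (exists q, j = 2 * q + 1).
Proof. destruct (Nat.Even_or_Odd j) as [[q Hq]|[q Hq]]; [left|right]; exists q; auto. Qed.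

Lemma eflip_props N j : (j < 2 * N)%nat ->
  (eflip j < 2 * N)%nat /\ eflip (eflip j) = j /\ eflip j <> j /\
  ep_edge (eflip j) = ep_edge j /\ Nat.even (eflip j) = negb (Nat.even j).
Proof.
  intros Hj. unfold eflip, ep_edge.
  destruct (eo_cases j) as [[q ->]|[q ->]].
  - rewrite eva. replace (S (2 * q)) with (2 * q + 1) by lia. rewrite evb, d2a, d2b.
    simpl. repeat split; lia.
  - rewrite evb. replace (pred (2 * q + 1)) with (2 * q) by lia. rewrite eva, d2a, d2b.
    simpl. repeat split; lia.
Qed.

Lemma same_edge N j k : (j < 2 * N)%nat -> (k < 2 * N)%nat -> ep_edge j = ep_edge k ->
  k = j \/ k = eflip j.
Proof.
  intros Hj Hk He. unfold ep_edge, eflip in *.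
  destruct (eo_cases j) as [[q ->]|[q ->]]; destruct (eo_cases k) as [[r ->]|[r ->]];
    rewrite ?d2a, ?d2b, ?eva, ?evb in *; lia.
Qed.

Section Combi.
Variable N : nat.
Variable V : nat -> nat.
Hypothesis Hdeg : forall j, (j < 2 * N)%nat -> degree N V j = 2%nat.
Hypothesis Hconn : connected_graph N V.
Hypothesis HN : (1 <= N)%nat.

Lemma partner_spec j : (j < 2 * N)%nat ->
  (partner N V j < 2 * N)%nat /\ partner N V j <> j /\ V (partner N V j) = V j /\
  forall k, (k < 2 * N)%nat -> V k = V j -> k = j \/ k = partner N V j.
Proof.
  intros Hj. pose proof (Hdeg j Hj) as Hd. unfold degree in Hd. unfold partner.
  remember (filter (fun k => Nat.eqb (V k) (V j)) (seq 0 (2 * N))) as l eqn:El.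
  assert (Hnd : NoDup l) by (subst; apply NoDup_filter, seq_NoDup).
  assert (Hin : forall k, In k l <-> (k < 2 * N)%nat /\ V k = V j).
  { intros k. subst l. rewrite filter_In, in_seq, Nat.eqb_eq. lia. }
  clear El.
  destruct l as [|a [|b [|c l']]]; simpl in Hd; try discriminate.
  assert (Ha := proj1 (Hin a) (or_introl eq_refl)).
  assert (Hb := proj1 (Hin b) (or_intror (or_introl eq_refl))).
  assert (Hab : a <> b) by (intro; subst; inversion Hnd; subst; simpl in *; tauto).
  assert (Hj' := proj2 (Hin j) (conj Hj eq_refl)). simpl in Hj'.
  destruct (Nat.eqb_spec a j).
  - subst. repeat split; try tauto; try lia.
    intros k Hk HV. destruct (proj2 (Hin k) (conj Hk HV)) as [|[|[]]]; auto.
  - assert (b = j) by tauto. subst. repeat split; try tauto; try lia.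
    intros k Hk HV. destruct (proj2 (Hin k) (conj Hk HV)) as [|[|[]]]; auto.
Qed.

Lemma partner_inv j : (j < 2 * N)%nat -> partner N V (partner N V j) = j.
Proof.
  intros Hj. destruct (partner_spec j Hj) as [H1 [H2 [H3 H4]]].
  destruct (partner_spec _ H1) as [G1 [G2 [G3 G4]]].
  destruct (H4 _ G1 (eq_trans G3 H3)) as [E|E]; auto. congruence.
Qed.

Lemma T_lt j : (j < 2 * N)%nat -> (Tstep N V j < 2 * N)%nat.
Proof. intros. unfold Tstep. apply partner_spec, eflip_props, H. Qed.

Lemma T_inj a b : (a < 2 * N)%nat -> (b < 2 * N)%nat -> Tstep N V a = Tstep N V b -> a = b.
Proof.
  intros Ha Hb E. unfold Tstep in E.
  pose proof (eflip_props N a Ha) as [A1 [A2 _]]. pose proof (eflip_props N b Hb) as [B1 [B2 _]].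
  apply (f_equal (partner N V)) in E. rewrite !partner_inv in E by auto.
  rewrite <- A2, <- B2, E. reflexivity.
Qed.

Lemma iter_lt t j : (j < 2 * N)%nat -> (Nat.iter t (Tstep N V) j < 2 * N)%nat.
Proof. induction t; simpl; auto. intros. apply T_lt; auto. Qed.

Lemma iter_inj t a b : (a < 2 * N)%nat -> (b < 2 * N)%nat ->
  Nat.iter t (Tstep N V) a = Nat.iter t (Tstep N V) b -> a = b.
Proof.
  induction t; simpl; auto. intros Ha Hb E. apply T_inj in E; try apply iter_lt; auto.
Qed.

Lemma T_rev y : (y < 2 * N)%nat -> Tstep N V (eflip (Tstep N V y)) = eflip y.
Proof.
  intros Hy. pose proof (eflip_props N _ (T_lt y Hy)) as [_ [E1 _]].
  unfold Tstep at 1. rewrite E1. unfold Tstep. apply partner_inv, eflip_props, Hy.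
Qed.

Lemma iter_rev m y : (y < 2 * N)%nat ->
  Nat.iter m (Tstep N V) (eflip (Nat.iter m (Tstep N V) y)) = eflip y.
Proof.
  induction m; intros Hy; [reflexivity|].
  rewrite Nat.iter_succ_r, (Nat.iter_succ m). rewrite T_rev by (apply iter_lt; auto).
  apply IHm; auto.
Qed.

Lemma no_both x k : (x < 2 * N)%nat -> Nat.iter k (Tstep N V) x = eflip x -> False.
Proof.
  intros Hx E.
  assert (Hpal : forall i, (i <= k)%nat ->
    Nat.iter i (Tstep N V) x = eflip (Nat.iter (k - i) (Tstep N V) x)).
  { intros i Hi. apply (iter_inj (k - i)); try apply iter_lt; auto.
    - apply eflip_props, iter_lt; auto.
    - rewrite <- Nat.iter_add. replace (k - i + i)%nat with k by lia. rewrite E.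
      rewrite iter_rev; auto. }
  destruct (Nat.Even_or_Odd k) as [[m Hm]|[m Hm]].
  - specialize (Hpal m ltac:(lia)). replace (k - m)%nat with m in Hpal by lia.
    eapply (proj1 (proj2 (proj2 (eflip_props N _ (iter_lt m x Hx))))). auto.
  - specialize (Hpal (S m) ltac:(lia)). replace (k - S m)%nat with m in Hpal by lia.
    rewrite Nat.iter_succ in Hpal. unfold Tstep in Hpal.
    set (z := eflip (Nat.iter m (Tstep N V) x)) in *.
    assert (Hz : (z < 2 * N)%nat) by (apply eflip_props, iter_lt; auto).
    eapply (proj1 (proj2 (partner_spec z Hz))). auto.
Qed.

Lemma nodup_map_seq (f : nat -> nat) n :
  (forall a b, (a < n)%nat -> (b < n)%nat -> f a = f b -> a = b) -> NoDup (map f (seq 0 n)).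
Proof.
  intros H. assert (G : forall s m, (s + m = n)%nat -> NoDup (map f (seq s m))).
  { intros s m. revert s. induction m; intros s Hs; simpl; constructor.
    - rewrite in_map_iff. intros [y [Ey Hy]]. rewrite in_seq in Hy.
      apply H in Ey; lia.
    - apply IHm. lia. }
  apply G. lia.
Qed.

Lemma exists_min (Q : nat -> Prop) : (exists n, Q n) -> exists n, Q n /\ forall m, (m < n)%nat -> ~ Q m.
Proof.
  intros [n Hn]. induction n as [n IH] using lt_wf_ind.
  destruct (classic (exists m, (m < n)%nat /\ Q m)) as [[m [Hm Qm]]|Hno].
  - apply (IH m Hm Qm).
  - exists n. split; auto. intros m Hm Qm. apply Hno; eauto.
Qed.

Lemma return_exists : exists P, (0 < P)%nat /\ Nat.iter P (Tstep N V) 0 = 0%nat.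
Proof.
  set (f := fun t => Nat.iter t (Tstep N V) 0).
  assert (H0 : (0 < 2 * N)%nat) by lia.
  destruct (classic (exists a b, (a < b)%nat /\ (b < S (2 * N))%nat /\ f a = f b)) as [[a [b [Hab [Hb E]]]]|Hno].
  - exists (b - a)%nat. split; [lia|]. unfold f in E.
    replace b with (a + (b - a))%nat in E by lia. rewrite Nat.iter_add in E.
    symmetry. apply (iter_inj a); [lia | apply iter_lt; lia | exact E].
  - exfalso. assert (Hnd : NoDup (map f (seq 0 (S (2 * N))))).
    { apply nodup_map_seq. intros a b Ha Hb E.
      destruct (lt_eq_lt_dec a b) as [[|]|]; auto; exfalso; apply Hno; eauto. }
    assert (Hinc : incl (map f (seq 0 (S (2 * N)))) (seq 0 (2 * N))).
    { intros y Hy. rewrite in_map_iff in Hy. destruct Hy as [t [<- _]].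
      rewrite in_seq. unfold f. pose proof (iter_lt t 0 H0). lia. }
    pose proof (NoDup_incl_length Hnd Hinc). rewrite length_map, !length_seq in H. lia.
Qed.

Lemma period : exists P, (0 < P)%nat /\ Nat.iter P (Tstep N V) 0 = 0%nat /\
  forall a b, (a < P)%nat -> (b < P)%nat -> Nat.iter a (Tstep N V) 0 = Nat.iter b (Tstep N V) 0 -> a = b.
Proof.
  destruct (exists_min (fun P => (0 < P)%nat /\ Nat.iter P (Tstep N V) 0 = 0%nat) return_exists)
    as [P [[HP EP] Hmin]].
  exists P. split; auto. split; auto.
  assert (G : forall a b, (a < b)%nat -> (b < P)%nat -> Nat.iter a (Tstep N V) 0 = Nat.iter b (Tstep N V) 0 -> False).
  { intros a b Hab HbP E. apply (Hmin (b - a)%nat); [lia|]. split; [lia|].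
    replace b with (a + (b - a))%nat in E by lia. rewrite Nat.iter_add in E.
    symmetry. apply (iter_inj a); [lia | apply iter_lt; lia | exact E]. }
  intros a b Ha Hb E. destruct (lt_eq_lt_dec a b) as [[|]|]; auto; exfalso; eauto.
Qed.


Lemma edge_lt j : (j < 2 * N)%nat -> (ep_edge j < N)%nat.
Proof. intros Hj. unfold ep_edge. destruct (eo_cases j) as [[q ->]|[q ->]]; rewrite ?d2a, ?d2b; lia. Qed.

Lemma walk_structure : walk N V N = 0 /\
  (forall j, j < 2 * N -> exists t, t < N /\ (j = walk N V t \/ j = eflip (walk N V t))) /\
  (forall t1 t2, t1 < N -> t2 < N -> ep_edge (walk N V t1) = ep_edge (walk N V t2) -> t1 = t2).
Proof.
  destruct period as [P [HP [EP Hdist]]].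
  set (it := fun t => Nat.iter t (Tstep N V) 0).
  assert (H0 : 0 < 2 * N) by lia.
  assert (Hmul : forall k, Nat.iter (k * P) (Tstep N V) 0 = 0).
  { induction k; simpl; auto. rewrite Nat.iter_add, IHk. auto. }
  assert (Hper : forall t, it t = it (t mod P)).
  { intros t. unfold it. pose proof (Nat.div_mod_eq t P) as Ht.
    remember (t / P) as q. remember (t mod P) as r. rewrite Ht.
    rewrite Nat.add_comm, Nat.iter_add, Nat.mul_comm, Hmul. reflexivity. }
  assert (Hlt : forall t, it t < 2 * N) by (intros; apply iter_lt; auto).
  set (InO := fun y => exists t, it t = y).
  assert (InO_lt : forall y, InO y -> exists t, t < P /\ it t = y).
  { intros y [t <-]. exists (t mod P). split; [apply Nat.mod_upper_bound; lia|]. symmetry; auto. }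
  assert (InO_pred : forall y, InO y -> exists z, InO z /\ Tstep N V z = y).
  { intros y [t <-]. exists (it (t + P - 1)). split; [eexists; eauto|].
    unfold it. rewrite <- Nat.iter_succ. replace (S (t + P - 1)) with (t + P) by lia.
    rewrite Nat.iter_add, EP. reflexivity. }
  assert (Hcov : forall j, j < 2 * N -> InO j \/ InO (eflip j)).
  { intros j Hj. pose proof (Hconn 0 j H0 Hj) as Hc. apply clos_rt_rtn1 in Hc.
    revert Hj. induction Hc as [|y z Hyz Hc IH]; intros Hj.
    - left. exists 0. reflexivity.
    - destruct Hyz as [Hy [Hz Hyz]]. specialize (IH Hy).
      destruct Hyz as [He|HV].
      + destruct (same_edge N y z Hy Hz He) as [E|E]; subst z; auto.
        rewrite (proj1 (proj2 (eflip_props N y Hy))). tauto.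
      + destruct (proj2 (proj2 (proj2 (partner_spec y Hy))) z Hz (eq_sym HV)) as [E|E]; subst z; auto.
        destruct IH as [IH|IH].
        * right. destruct (InO_pred y IH) as [u [Hu Eu]]. unfold Tstep in Eu.
          destruct Hu as [tu Etu].
          assert (Hul : u < 2 * N) by (rewrite <- Etu; auto).
          rewrite <- Eu, partner_inv by (apply eflip_props; auto).
          rewrite (proj1 (proj2 (eflip_props N u Hul))). exists tu; auto.
        * left. destruct IH as [t Et]. exists (S t). unfold it in *. rewrite Nat.iter_succ, Et.
          unfold Tstep. rewrite (proj1 (proj2 (eflip_props N y Hy))). reflexivity. }
  assert (Hnb : forall x, x < 2 * N -> InO x -> InO (eflip x) -> False).
  { intros x Hx [a Ea] [b Eb]. destruct (le_lt_dec a b).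
    - apply (no_both x (b - a) Hx). rewrite <- Eb, <- Ea. unfold it.
      rewrite <- Nat.iter_add. f_equal. lia.
    - assert (Hex : eflip x < 2 * N) by (apply eflip_props; auto).
      apply (no_both (eflip x) (a - b) Hex). rewrite (proj1 (proj2 (eflip_props N x Hx))).
      rewrite <- Eb, <- Ea. unfold it. rewrite <- Nat.iter_add. f_equal. lia. }
  assert (Hinj : forall a b, a < P -> b < P -> ep_edge (it a) = ep_edge (it b) -> a = b).
  { intros a b Ha Hb E. destruct (same_edge N (it a) (it b) (Hlt a) (Hlt b) E) as [E'|E'].
    - apply Hdist; auto.
    - exfalso. apply (Hnb (it a) (Hlt a)); [eexists; eauto|]. rewrite <- E'. eexists; eauto. }
  assert (HPN : P = N).
  { apply Nat.le_antisymm.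
    - assert (Hnd : NoDup (map (fun t => ep_edge (it t)) (seq 0 P))) by (apply nodup_map_seq; auto).
      assert (Hinc : incl (map (fun t => ep_edge (it t)) (seq 0 P)) (seq 0 N)).
      { intros y Hy. rewrite in_map_iff in Hy. destruct Hy as [t [<- _]].
        rewrite in_seq. pose proof (edge_lt _ (Hlt t)). lia. }
      pose proof (NoDup_incl_length Hnd Hinc). rewrite length_map, !length_seq in H. auto.
    - assert (Hinc : incl (seq 0 N) (map (fun t => ep_edge (it t)) (seq 0 P))).
      { intros n Hn. rewrite in_seq in Hn. rewrite in_map_iff.
        assert (H2n : 2 * n < 2 * N) by lia.
        assert (Ee : ep_edge (2 * n) = n) by (unfold ep_edge; apply d2a).
        destruct (Hcov _ H2n) as [Hc|Hc]; destruct (InO_lt _ Hc) as [t [Ht Et]]; exists t;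
          rewrite in_seq; split; try lia; rewrite Et; auto.
        rewrite (proj1 (proj2 (proj2 (proj2 (eflip_props N _ H2n))))). auto. }
      pose proof (NoDup_incl_length (seq_NoDup N 0) Hinc). rewrite length_map, !length_seq in H. auto. }
  subst P. split; [exact EP|]. split.
  - intros j Hj. destruct (Hcov j Hj) as [Hc|Hc]; destruct (InO_lt _ Hc) as [t [Ht Et]];
      exists t; split; auto.
    right. rewrite <- (proj1 (proj2 (eflip_props N j Hj))). rewrite <- Et. reflexivity.
  - exact Hinj.
Qed.

End Combi.

Open Scope R_scope.

Lemma isd_eq (f : R -> R) (x l l' : R) : is_derive f x l -> l = l' -> is_derive f x l'.
Proof. intros H <-; auto. Qed.

Lemma isd_ext (f g : R -> R) (x l : R) : (forall t, f t = g t) -> is_derive f x l -> is_derive g x l.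
Proof. intros H. apply is_derive_ext. auto. Qed.

Lemma d_mult (f g : R -> R) (x df dg : R) : is_derive f x df -> is_derive g x dg ->
  is_derive (fun t => f t * g t) x (df * g x + f x * dg).
Proof. intros. apply (is_derive_mult f g x df dg); auto. intros; apply Rmult_comm. Qed.

Lemma d_plus (f g : R -> R) (x df dg : R) : is_derive f x df -> is_derive g x dg ->
  is_derive (fun t => f t + g t) x (df + dg).
Proof. intros. apply (is_derive_plus f g x df dg); auto. Qed.

Lemma d_minus (f g : R -> R) (x df dg : R) : is_derive f x df -> is_derive g x dg ->
  is_derive (fun t => f t - g t) x (df - dg).
Proof. intros. apply (is_derive_minus f g x df dg); auto. Qed.

Lemma d_scal (f : R -> R) (x k df : R) : is_derive f x df -> is_derive (fun t => k * f t) x (k * df).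
Proof. apply is_derive_scal. Qed.

Lemma d_const (k x : R) : is_derive (fun _ => k) x 0.
Proof. apply (is_derive_const k x). Qed.

Lemma d_id (x : R) : is_derive (fun t : R => t) x 1.
Proof. apply (is_derive_id x). Qed.

Lemma d_comp (f g : R -> R) (x df dg : R) : is_derive f (g x) df -> is_derive g x dg ->
  is_derive (fun t => f (g t)) x (dg * df).
Proof. intros. apply (is_derive_comp f g x df dg); auto. Qed.

Lemma d_lin (f : R -> R) (x a b df : R) : is_derive f (a * x + b) df -> is_derive (fun t => f (a * t + b)) x (a * df).
Proof.
  intros H. apply (d_comp f (fun t => a * t + b)); auto.
  eapply isd_eq. apply d_plus. apply d_scal. apply d_id. apply d_const. ring.
Qed.

Lemma d_cos (x : R) : is_derive cos x (- sin x). Proof. apply is_derive_cos. Qed.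
Lemma d_sin (x : R) : is_derive sin x (cos x). Proof. apply is_derive_sin. Qed.
Lemma d_exp (x : R) : is_derive exp x (exp x). Proof. apply is_derive_exp. Qed.

Lemma d_kx (x k : R) : is_derive (fun t => k * t) x k.
Proof. eapply isd_eq. apply d_scal, d_id. ring. Qed.

Lemma d_fk (f : R -> R) (x k df : R) : is_derive f (k * x) df -> is_derive (fun t => f (k * t)) x (k * df).
Proof. intros H. apply (d_comp f (fun t => k * t)); auto. apply d_kx. Qed.

Lemma R2D (f : R -> R) (x l : R) : derivable_pt_lim f x l -> is_derive f x l.
Proof. apply is_derive_Reals. Qed.
Lemma D2R (f : R -> R) (x l : R) : is_derive f x l -> derivable_pt_lim f x l.
Proof. apply is_derive_Reals. Qed.

Lemma const_on (F F' : R -> R) (a b : R) :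
  (forall x, is_derive F x (F' x)) -> (forall x, a < x < b -> F' x = 0) ->
  forall x, a <= x <= b -> F x = F a.
Proof.
  intros HF HF0.
  assert (pr : forall x, a < x < b -> derivable_pt F x).
  { intros x _. exists (F' x). apply D2R, HF. }
  intros x Hx. apply (null_derivative_loc F a b pr); auto.
  - intros y _. apply derivable_continuous_pt. exists (F' y). apply D2R, HF.
  - intros y P. destruct (pr y P) as [l Hl] eqn:E. simpl.
    assert (l = F' y). { apply (uniqueness_limite F y); auto. apply D2R, HF. }
    rewrite H. apply HF0; auto.
Qed.

Lemma ode_uniq lam (h dh ddh : R -> R) a b c :
  a <= c <= b ->
  (forall x, derivable_pt_lim h x (dh x)) -> (forall x, derivable_pt_lim dh x (ddh x)) ->
  (forall x, a < x < b -> ddh x = - lam * h x) -> h c = 0 -> dh c = 0 ->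
  forall x, a <= x <= b -> h x = 0 /\ dh x = 0.
Proof.
  intros Hc Hh Hdh Hode H0 D0.
  assert (Hh' : forall x, is_derive h x (dh x)) by (intros; apply R2D; auto).
  assert (Hdh' : forall x, is_derive dh x (ddh x)) by (intros; apply R2D; auto).
  destruct (Rtotal_order lam 0) as [Hneg|[Hz|Hpos]].
  - set (r := sqrt (- lam)).
    assert (Hr : 0 < r) by (apply sqrt_lt_R0; lra).
    assert (Hr2 : r * r = - lam) by (apply sqrt_sqrt; lra).
    set (U := fun x => (dh x + r * h x) * exp (- r * x)).
    set (W := fun x => (dh x - r * h x) * exp (r * x)).
    assert (HU : forall x, a <= x <= b -> U x = U a).
    { apply (const_on U (fun x => (ddh x + r * dh x) * exp (- r * x) + (dh x + r * h x) * (- r * exp (- r * x)))).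
      - intros x. apply (d_mult (fun t => dh t + r * h t) (fun t => exp (- r * t))).
        apply d_plus; auto. apply d_scal; auto.
        eapply isd_eq. apply (d_fk exp x (- r)). apply d_exp. ring.
      - intros x Hx. rewrite Hode by auto. replace (- lam) with (r * r) by lra. ring. }
    assert (HW : forall x, a <= x <= b -> W x = W a).
    { apply (const_on W (fun x => (ddh x - r * dh x) * exp (r * x) + (dh x - r * h x) * (r * exp (r * x)))).
      - intros x. apply (d_mult (fun t => dh t - r * h t) (fun t => exp (r * t))).
        apply d_minus; auto. apply d_scal; auto.
        eapply isd_eq. apply (d_fk exp x r). apply d_exp. ring.
      - intros x Hx. rewrite Hode by auto. replace (- lam) with (r * r) by lra. ring. }
    intros x Hx.
    assert (U x = 0). { rewrite HU, <- (HU c) by lra. unfold U. rewrite H0, D0. ring. }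
    assert (W x = 0). { rewrite HW, <- (HW c) by lra. unfold W. rewrite H0, D0. ring. }
    unfold U, W in *.
    apply Rmult_integral in H. apply Rmult_integral in H1.
    pose proof (exp_pos (- r * x)). pose proof (exp_pos (r * x)).
    destruct H; [|lra]. destruct H1; [|lra]. split; nra.
  - subst lam.
    assert (HQ : forall x, a <= x <= b -> dh x * dh x = dh a * dh a).
    { apply (const_on (fun x => dh x * dh x) (fun x => ddh x * dh x + dh x * ddh x)).
      - intros x. apply (d_mult dh dh); auto.
      - intros x Hx. rewrite Hode by auto. ring. }
    assert (Hd0 : forall x, a <= x <= b -> dh x = 0).
    { intros x Hx. assert (dh x * dh x = 0) by (rewrite HQ, <- (HQ c) by lra; rewrite D0; ring). nra. }
    assert (HH : forall x, a <= x <= b -> h x = h a).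
    { apply (const_on h dh); auto. intros x Hx. apply Hd0; lra. }
    intros x Hx. split; auto. rewrite HH, <- (HH c) by lra. auto.
  - assert (HQ : forall x, a <= x <= b -> dh x * dh x + lam * (h x * h x) = dh a * dh a + lam * (h a * h a)).
    { apply (const_on (fun x => dh x * dh x + lam * (h x * h x))
        (fun x => (ddh x * dh x + dh x * ddh x) + lam * (dh x * h x + h x * dh x))).
      - intros x. apply (d_plus (fun t => dh t * dh t) (fun t => lam * (h t * h t))).
        apply (d_mult dh dh); auto. apply d_scal. apply (d_mult h h); auto.
      - intros x Hx. rewrite Hode by auto. ring. }
    intros x Hx.
    assert (dh x * dh x + lam * (h x * h x) = 0) by (rewrite HQ, <- (HQ c) by lra; rewrite D0, H0; ring).
    assert (0 <= dh x * dh x) by nra. assert (0 <= lam * (h x * h x)) by (apply Rmult_le_pos; nra).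
    assert (E1 : dh x * dh x = 0) by lra. assert (E2 : lam * (h x * h x) = 0) by lra.
    apply Rmult_integral in E2. destruct E2 as [E2|E2]; [lra|].
    split; [apply Rmult_integral in E2; tauto|apply Rmult_integral in E1; tauto].
Qed.

Definition Cf (lam s : R) : R :=
  if Rlt_dec 0 lam then cos (sqrt lam * s)
  else if Rlt_dec lam 0 then (exp (sqrt (- lam) * s) + exp (- sqrt (- lam) * s)) / 2
  else 1.
Definition Sf (lam s : R) : R :=
  if Rlt_dec 0 lam then sin (sqrt lam * s) / sqrt lam
  else if Rlt_dec lam 0 then (exp (sqrt (- lam) * s) - exp (- sqrt (- lam) * s)) / (2 * sqrt (- lam))
  else s.

Lemma CS_deriv lam s : is_derive (Cf lam) s (- lam * Sf lam s) /\ is_derive (Sf lam) s (Cf lam s).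
Proof.
  unfold Cf, Sf. destruct (Rlt_dec 0 lam) as [Hp|Hp].
  - assert (Hr : 0 < sqrt lam) by (apply sqrt_lt_R0; lra).
    assert (Hr2 : sqrt lam * sqrt lam = lam) by (apply sqrt_sqrt; lra).
    split.
    + eapply isd_eq. apply (d_fk cos s (sqrt lam)). apply d_cos.
      set (r := sqrt lam) in *. rewrite <- Hr2. field. lra.
    + eapply isd_eq. apply (isd_ext (fun t => / sqrt lam * sin (sqrt lam * t)));
      [intros; unfold Rdiv; ring|]. apply d_scal. apply (d_fk sin s (sqrt lam)). apply d_sin.
      field. lra.
  - destruct (Rlt_dec lam 0) as [Hn|Hn].
    + set (r := sqrt (- lam)).
      assert (Hr : 0 < r) by (apply sqrt_lt_R0; lra).
      assert (Hr2 : r * r = - lam) by (apply sqrt_sqrt; lra).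
      split.
      * eapply isd_eq. apply (isd_ext (fun t => / 2 * (exp (r * t) + exp (- r * t))));
        [intros; unfold Rdiv; ring|]. apply d_scal. apply d_plus.
        apply (d_fk exp s r), d_exp. apply (d_fk exp s (- r)), d_exp.
        rewrite <- Hr2. field. lra.
      * eapply isd_eq. apply (isd_ext (fun t => / (2 * r) * (exp (r * t) - exp (- r * t))));
        [intros; unfold Rdiv; ring|]. apply d_scal. apply d_minus.
        apply (d_fk exp s r), d_exp. apply (d_fk exp s (- r)), d_exp.
        field. lra.
    + assert (lam = 0) by lra. subst. split.
      * eapply isd_eq. apply d_const. ring.
      * apply d_id.
Qed.

Lemma CS_0 lam : Cf lam 0 = 1 /\ Sf lam 0 = 0.
Proof.
  unfold Cf, Sf. destruct (Rlt_dec 0 lam).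
  - rewrite Rmult_0_r, cos_0, sin_0. split; [auto|unfold Rdiv; ring].
  - destruct (Rlt_dec lam 0); rewrite ?Rmult_0_r, ?exp_0; split; auto; try (unfold Rdiv; ring); field.
Qed.

Definition Phi (lam A B s : R) := A * Cf lam s + B * Sf lam s.
Definition dPhi (lam A B s : R) := A * (- lam * Sf lam s) + B * Cf lam s.

Lemma Phi_deriv lam A B s : is_derive (Phi lam A B) s (dPhi lam A B s) /\
  is_derive (dPhi lam A B) s (- lam * Phi lam A B s).
Proof.
  destruct (CS_deriv lam s) as [HC HS]. unfold Phi, dPhi. split.
  - apply (d_plus (fun t => A * Cf lam t) (fun t => B * Sf lam t)); apply d_scal; auto.
  - eapply isd_eq.
    apply (d_plus (fun t => A * (- lam * Sf lam t)) (fun t => B * Cf lam t));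
      apply d_scal; [apply d_scal|]; eauto.
    ring.
Qed.

Lemma cos_per_Z x m : cos (x + 2 * IZR m * PI) = cos x.
Proof.
  destruct (Z_le_gt_dec 0 m) as [Hm|Hm].
  - rewrite <- (Z2Nat.id m Hm). rewrite <- INR_IZR_INZ. apply cos_period.
  - replace m with (- Z.of_nat (Z.to_nat (- m)))%Z by lia.
    rewrite opp_IZR, <- INR_IZR_INZ.
    set (n := Z.to_nat (- m)).
    rewrite <- (cos_period (x + 2 * - INR n * PI) n). f_equal. ring.
Qed.

Lemma cos_eq_1_Z x : cos x = 1 -> exists m : Z, x = 2 * IZR m * PI.
Proof.
  intros Hc. assert (Hs : sin x = 0).
  { pose proof (sin2_cos2 x). unfold Rsqr in H. rewrite Hc in H. nra. }
  destruct (sin_eq_0_0 x Hs) as [k ->].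
  destruct (Zeven_odd_dec k) as [He|Ho].
  - destruct (Zeven_ex k He) as [m ->]. exists m. rewrite mult_IZR. ring.
  - destruct (Zodd_ex k Ho) as [m ->]. exfalso.
    rewrite plus_IZR, mult_IZR in Hc.
    replace ((2 * IZR m + 1) * PI) with (PI + 2 * IZR m * PI) in Hc by ring.
    rewrite cos_per_Z, cos_PI in Hc. lra.
Qed.

Lemma wrap lam A B E : 0 < E ->
  Phi lam A B E = Phi lam A B 0 -> dPhi lam A B E = dPhi lam A B 0 ->
  (A = 0 /\ B = 0) \/ (lam = 0 /\ B = 0) \/ (0 < lam /\ cos (sqrt lam * E) = 1).
Proof.
  intros HE H1 H2. destruct (CS_0 lam) as [C0 S0].
  unfold Phi, dPhi in *. rewrite C0, S0 in *.
  unfold Cf, Sf in *. destruct (Rlt_dec 0 lam) as [Hp|Hp].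
  - destruct (Req_dec (cos (sqrt lam * E)) 1) as [Hc|Hc]; [right; right; auto|left].
    set (w := sqrt lam) in *.
    assert (Hw : 0 < w) by (apply sqrt_lt_R0; lra).
    assert (Hw2 : w * w = lam) by (apply sqrt_sqrt; lra).
    set (c := cos (w * E)) in *. set (s := sin (w * E)) in *.
    assert (Hcs : s * s + c * c = 1) by (pose proof (sin2_cos2 (w * E)); unfold Rsqr in H; auto).
    assert (E1 : (c - 1) * A + s * (B / w) = 0) by (unfold Rdiv in *; lra).
    assert (E2 : - s * A + (c - 1) * (B / w) = 0).
    { assert (H2' : - (w * s) * A + B * c = B).
      { replace (w * s) with (w * w * (s / w)) by (field; lra). rewrite Hw2. lra. }
      replace (- s * A + (c - 1) * (B / w)) with (/ w * (- (w * s) * A + B * c - B)) by (field; lra).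
      rewrite H2'. ring. }
    assert (Hpos : 0 < (c - 1) * (c - 1) + s * s).
    { assert (c - 1 <> 0) by lra. nra. }
    assert (HA : A = 0).
    { assert (((c - 1) * (c - 1) + s * s) * A = 0).
      { replace (((c - 1) * (c - 1) + s * s) * A) with
          ((c - 1) * ((c - 1) * A + s * (B / w)) - s * (- s * A + (c - 1) * (B / w))) by ring.
        rewrite E1, E2. ring. }
      apply Rmult_integral in H. lra. }
    subst A. split; auto.
    assert (HB : B / w = 0).
    { assert (((c - 1) * (c - 1) + s * s) * (B / w) = 0).
      { replace (((c - 1) * (c - 1) + s * s) * (B / w)) with
          (s * ((c - 1) * 0 + s * (B / w)) + (c - 1) * (- s * 0 + (c - 1) * (B / w))) by ring.
        rewrite E1, E2. ring. }
      apply Rmult_integral in H. lra. }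
    unfold Rdiv in HB. apply Rmult_integral in HB. destruct HB as [HB|HB]; auto.
    exfalso. apply Rinv_neq_0_compat in HB; lra.
  - destruct (Rlt_dec lam 0) as [Hn|Hn].
    + left. set (r := sqrt (- lam)) in *.
      assert (Hr : 0 < r) by (apply sqrt_lt_R0; lra).
      assert (Hr2 : r * r = - lam) by (apply sqrt_sqrt; lra).
      rewrite Rmult_0_r, exp_0 in *.
      set (u := exp (r * E)) in *.
      assert (Hu : 1 < u) by (unfold u; rewrite <- exp_0; apply exp_increasing; nra).
      assert (Hv : exp (- r * E) = / u) by (unfold u; rewrite <- exp_Ropp; f_equal; ring).
      rewrite Hv in *.
      assert (E1 : A * (u + / u - 2) + B / r * (u - / u) = 0).
      { replace (A * (u + / u - 2) + B / r * (u - / u)) with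
          (2 * (A * ((u + / u) / 2) + B * ((u - / u) / (2 * r))) - 2 * A) by (field; lra).
        rewrite H1. ring. }
      assert (E2 : A * (u - / u) + B / r * (u + / u - 2) = 0).
      { replace (A * (u - / u) + B / r * (u + / u - 2)) with
          (2 / r * (A * (r * r * ((u - / u) / (2 * r))) + B * ((u + / u) / 2)) - 2 / r * B) by (field; lra).
        rewrite Hr2, H2. field. lra. }
      set (B' := B / r) in *.
      assert (Hg : (u + / u - 2) * (u + / u - 2) - (u - / u) * (u - / u) = 8 - 4 * (u + / u)).
      { field. lra. }
      assert (Hlt : 2 < u + / u).
      { assert (0 < / u) by (apply Rinv_0_lt_compat; lra).
        assert (0 < (u - 1) * (u - 1)) by nra.
        assert ((u + / u - 2) * u = (u - 1) * (u - 1)) by (field; lra). nra. }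
      assert (HA : A = 0).
      { assert (A * ((u + / u - 2) * (u + / u - 2) - (u - / u) * (u - / u)) = 0).
        { replace (A * ((u + / u - 2) * (u + / u - 2) - (u - / u) * (u - / u))) with
            ((u + / u - 2) * (A * (u + / u - 2) + B' * (u - / u)) - (u - / u) * (A * (u - / u) + B' * (u + / u - 2))) by ring.
          rewrite E1, E2. ring. }
        rewrite Hg in H. apply Rmult_integral in H. lra. }
      subst A. split; auto.
      assert (B' = 0).
      { rewrite Rmult_0_l, Rplus_0_l in E2. apply Rmult_integral in E2. lra. }
      unfold B', Rdiv in H. apply Rmult_integral in H. destruct H as [H|H]; auto.
      exfalso. apply Rinv_neq_0_compat in H; lra.
    + right; left. assert (lam = 0) by lra. split; auto.
      assert (B * E = 0) by lra. apply Rmult_integral in H0. lra.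
Qed.

Lemma isR_ext (f g : R -> R) (a b l : R) :
  (forall x, a <= x <= b -> f x = g x) -> a <= b -> is_RInt f a b l -> is_RInt g a b l.
Proof.
  intros H Hab. apply is_RInt_ext. intros x Hx. rewrite Rmin_left, Rmax_right in Hx by lra.
  apply H; lra.
Qed.

Lemma isR_eq (f : R -> R) (a b l l' : R) : is_RInt f a b l -> l = l' -> is_RInt f a b l'.
Proof. intros H <-; auto. Qed.

Lemma isR_unique (f : R -> R) (a b l l' : R) : is_RInt f a b l -> is_RInt f a b l' -> l = l'.
Proof.
  intros H1 H2. pose proof (is_RInt_unique (V := R_CompleteNormedModule) f a b l H1).
  pose proof (is_RInt_unique (V := R_CompleteNormedModule) f a b l' H2). congruence.
Qed.

Lemma isR_plus (f g : R -> R) (a b lf lg : R) : is_RInt f a b lf -> is_RInt g a b lg ->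
  is_RInt (fun x => f x + g x) a b (lf + lg).
Proof. intros. apply (is_RInt_plus f g a b lf lg); auto. Qed.

Lemma isR_scal (f : R -> R) (a b k l : R) : is_RInt f a b l -> is_RInt (fun x => k * f x) a b (k * l).
Proof. intros. apply (is_RInt_scal f a b k l); auto. Qed.

Lemma isR_const (a b k : R) : is_RInt (fun _ => k) a b ((b - a) * k).
Proof. apply (is_RInt_const a b k). Qed.

Lemma isR_rsum (g : nat -> R -> R) (I : nat -> R) (a b : R) k :
  (forall i, (i < k)%nat -> is_RInt (g i) a b (I i)) ->
  is_RInt (fun x => rsum k (fun i => g i x)) a b (rsum k I).
Proof.
  induction k; intros H; simpl.
  - eapply isR_eq. apply isR_const. ring.
  - apply (isR_plus (fun x => rsum k (fun i => g i x)) (g k)); auto.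
Qed.

Lemma cont_of_der (f : R -> R) (x l : R) : is_derive f x l -> continuous f x.
Proof. intros H. apply continuity_pt_filterlim. apply derivable_continuous_pt. exists l. apply D2R; auto. Qed.

Lemma int_cos_nz (T a phi : R) : 0 < T -> a <> 0 ->
  is_RInt (fun s => cos (a * s - phi)) 0 T ((sin (a * T - phi) + sin phi) / a).
Proof.
  intros HT Ha.
  assert (HF : forall x, is_derive (fun s => sin (a * s - phi) / a) x (cos (a * x - phi))).
  { intros x. eapply isd_eq. apply (isd_ext (fun s => / a * sin (a * s + - phi))).
    intros; unfold Rdiv, Rminus; ring. apply d_scal. apply (d_lin sin x a (- phi)). apply d_sin.
    unfold Rminus. field. auto. }
  eapply isR_eq. apply (is_RInt_derive (fun s => sin (a * s - phi) / a)).
  - intros x _. apply HF.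
  - intros x _. apply (cont_of_der _ x (- sin (a * x - phi) * a)). eapply isd_eq.
    apply (isd_ext (fun s => cos (a * s + - phi))). intros; unfold Rminus; auto.
    apply (d_lin cos x a (- phi)). apply d_cos. unfold Rminus; ring.
  - simpl. unfold minus, plus, opp; simpl. rewrite Rmult_0_r.
    replace (0 - phi) with (- phi) by ring. rewrite sin_antisym. field. auto.
Qed.

Lemma sin_intPI (q : Z) : sin (IZR q * PI) = 0.
Proof. apply sin_eq_0_1. eauto. Qed.

Lemma sin_per_Z x m : sin (x + 2 * IZR m * PI) = sin x.
Proof.
  rewrite <- (cos_shift (x + 2 * IZR m * PI)), <- (cos_shift x).
  replace (PI / 2 - (x + 2 * IZR m * PI)) with ((PI / 2 - x) + 2 * IZR (- m) * PI)
    by (rewrite opp_IZR; ring).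
  apply cos_per_Z.
Qed.

Lemma int_cos_Z (T : R) (q : Z) : 0 < T -> q <> 0%Z ->
  is_RInt (fun s => cos (IZR q * PI / T * s)) 0 T 0.
Proof.
  intros HT Hq. assert (HP := PI_RGT_0).
  assert (IZR q <> 0) by (apply not_0_IZR; auto).
  assert (Ha : IZR q * PI / T <> 0).
  { intro H0. unfold Rdiv in H0. apply Rmult_integral in H0.
    destruct H0 as [H0|H0]; [apply Rmult_integral in H0; lra|]. apply Rinv_neq_0_compat in H0; lra. }
  pose proof (int_cos_nz T (IZR q * PI / T) 0 HT Ha) as H1.
  replace (IZR q * PI / T * T - 0) with (IZR q * PI) in H1 by (field; lra).
  rewrite sin_intPI, sin_0 in H1. replace ((0 + 0) / (IZR q * PI / T)) with 0 in H1 by (unfold Rdiv; ring).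
  eapply isR_ext; [|lra|exact H1]. intros x _. cbv beta. rewrite Rminus_0_r. reflexivity.
Qed.

Lemma int_cos_gen (T : R) (m : Z) (phi : R) : 0 < T ->
  is_RInt (fun s => cos (IZR (2 * m) * PI / T * s - phi)) 0 T
    (if Z.eqb m 0 then T * cos phi else 0).
Proof.
  intros HT. assert (HP := PI_RGT_0). destruct (Z.eqb_spec m 0) as [->|Hm].
  - eapply isR_eq; [|apply Rmult_comm]. 
    eapply isR_ext; [|lra|eapply isR_eq; [apply (isR_const 0 T (cos phi))|]].
    + intros x _. cbv beta. replace (IZR (2 * 0) * PI / T * x - phi) with (- phi) by (simpl; field; lra).
      rewrite cos_neg. auto.
    + ring.
  - assert (Hz : IZR (2 * m) <> 0) by (apply not_0_IZR; lia).
    assert (Ha : IZR (2 * m) * PI / T <> 0).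
    { intro H0. unfold Rdiv in H0. apply Rmult_integral in H0.
      destruct H0 as [H0|H0]; [apply Rmult_integral in H0; lra|]. apply Rinv_neq_0_compat in H0; lra. }
    pose proof (int_cos_nz T (IZR (2 * m) * PI / T) phi HT Ha) as H1.
    replace (IZR (2 * m) * PI / T * T - phi) with (- phi + 2 * IZR m * PI) in H1
      by (rewrite mult_IZR; field; lra).
    rewrite sin_per_Z, sin_antisym in H1.
    replace ((- sin phi + sin phi) / (IZR (2 * m) * PI / T)) with 0 in H1 by (unfold Rdiv; ring).
    exact H1.
Qed.

Lemma cos_prod u v : cos u * cos v = (cos (u - v) + cos (u + v)) / 2.
Proof. rewrite cos_minus, cos_plus. field. Qed.

Lemma int_prod (T : R) (p r : nat) (phi psi : R) : 0 < T ->
  is_RInt (fun s => cos (2 * PI * INR p / T * s - phi) * cos (2 * PI * INR r / T * s - psi)) 0 T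
    (((if Nat.eqb p r then T * cos (phi - psi) else 0) +
      (if Nat.eqb (p + r) 0 then T * cos (phi + psi) else 0)) / 2).
Proof.
  intros HT.
  pose proof (int_cos_gen T (Z.of_nat p - Z.of_nat r) (phi - psi) HT) as I1.
  pose proof (int_cos_gen T (Z.of_nat p + Z.of_nat r) (phi + psi) HT) as I2.
  pose proof (isR_scal _ 0 T (/ 2) _ (isR_plus _ _ 0 T _ _ I1 I2)) as I3.
  eapply isR_ext; [| lra | eapply isR_eq; [exact I3|]].
  - intros x _. cbv beta. rewrite cos_prod. rewrite !mult_IZR, minus_IZR, plus_IZR, <- !INR_IZR_INZ.
    unfold Rdiv. rewrite (Rmult_comm (/ 2)). f_equal. f_equal; f_equal; ring.
  - replace (Z.eqb (Z.of_nat p - Z.of_nat r) 0) with (Nat.eqb p r).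
    2: { destruct (Nat.eqb_spec p r); destruct (Z.eqb_spec (Z.of_nat p - Z.of_nat r) 0); auto; lia. }
    replace (Z.eqb (Z.of_nat p + Z.of_nat r) 0) with (Nat.eqb (p + r) 0).
    2: { destruct (Nat.eqb_spec (p + r) 0); destruct (Z.eqb_spec (Z.of_nat p + Z.of_nat r) 0); auto; lia. }
    unfold Rdiv. apply Rmult_comm.
Qed.

Lemma sin_prod u v : sin u * sin v = (cos (u - v) - cos (u + v)) / 2.
Proof. rewrite cos_minus, cos_plus. field. Qed.

Lemma int_sin_prod (T : R) (a b : nat) : 0 < T -> (1 <= a)%nat -> (1 <= b)%nat ->
  is_RInt (fun x => sin (INR a * PI / T * x) * sin (INR b * PI / T * x)) 0 T
    (if Nat.eqb a b then T / 2 else 0).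
Proof.
  intros HT Ha Hb.
  assert (I2 := int_cos_Z T (Z.of_nat a + Z.of_nat b) HT ltac:(lia)).
  assert (I1 : is_RInt (fun x => cos (IZR (Z.of_nat a - Z.of_nat b) * PI / T * x)) 0 T
                 (if Nat.eqb a b then T else 0)).
  { destruct (Nat.eqb_spec a b) as [->|Hne].
    - eapply isR_ext; [|lra|eapply isR_eq; [apply (isR_const 0 T 1)|ring]].
      intros x _. cbv beta. replace (Z.of_nat b - Z.of_nat b)%Z with 0%Z by lia.
      replace (IZR 0 * PI / T * x) with 0 by (simpl; field; lra). rewrite cos_0; auto.
    - apply int_cos_Z; auto. lia. }
  pose proof (isR_scal _ 0 T (/ 2) _ (isR_plus _ _ 0 T _ _ I1 (isR_scal _ 0 T (-1) _ I2))) as I3.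
  eapply isR_ext; [| lra | eapply isR_eq; [exact I3|]].
  - intros x _. cbv beta. rewrite sin_prod. rewrite minus_IZR, plus_IZR, <- !INR_IZR_INZ.
    unfold Rdiv. rewrite (Rmult_comm (/ 2)). f_equal. unfold Rminus. f_equal; [f_equal; ring|].
    replace (INR a * PI * / T * x + INR b * PI * / T * x) with ((INR a + INR b) * PI * / T * x) by ring. ring.
  - destruct (Nat.eqb a b); unfold Rdiv; ring.
Qed.


Definition kk i := Nat.div (S i) 2.
Definition ph i : R := if andb (Nat.even i) (negb (Nat.eqb i 0)) then PI / 2 else 0.
Definition kap E i := 2 * PI * INR (kk i) / E.
Definition Bs E i s := cos (kap E i * s - ph i).
Definition dBs E i s := - kap E i * sin (kap E i * s - ph i).

Lemma Bs_deriv E i s : is_derive (Bs E i) s (dBs E i s) /\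
  is_derive (dBs E i) s (- (kap E i * kap E i) * Bs E i s).
Proof.
  unfold Bs, dBs. split.
  - eapply isd_eq. apply (isd_ext (fun s => cos (kap E i * s + - ph i))). intros; f_equal.
    apply (d_lin cos s (kap E i) (- ph i)). apply d_cos. unfold Rminus. ring.
  - eapply isd_eq. apply d_scal. apply (isd_ext (fun s => sin (kap E i * s + - ph i))). intros; f_equal.
    apply (d_lin sin s (kap E i) (- ph i)). apply d_sin. unfold Rminus. ring.
Qed.

Lemma Bs_per E i : 0 < E -> Bs E i E = Bs E i 0 /\ dBs E i E = dBs E i 0.
Proof.
  intros HE. unfold Bs, dBs, kap. rewrite Rmult_0_r.
  replace (2 * PI * INR (kk i) / E * E - ph i) with ((0 - ph i) + 2 * INR (kk i) * PI) by (field; lra).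
  rewrite cos_period, sin_period. auto.
Qed.

Lemma kk_e a : kk (2 * a) = a.
Proof. unfold kk. replace (S (2 * a)) with (2 * a + 1)%nat by lia. apply d2b. Qed.
Lemma kk_o a : kk (2 * a + 1) = S a.
Proof. unfold kk. replace (S (2 * a + 1)) with (2 * S a)%nat by lia. apply d2a. Qed.
Lemma ph_e a : ph (2 * a) = if Nat.eqb a 0 then 0 else PI / 2.
Proof. unfold ph. rewrite eva. destruct (Nat.eqb_spec a 0); destruct (Nat.eqb_spec (2 * a) 0); simpl; auto; lia. Qed.
Lemma ph_o a : ph (2 * a + 1) = 0.
Proof. unfold ph. rewrite evb. reflexivity. Qed.

Lemma Bs_gram E i m : 0 < E ->
  is_RInt (fun s => Bs E i s * Bs E m s) 0 E
    (if Nat.eqb i m then (if Nat.eqb i 0 then E else E / 2) else 0).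
Proof.
  intros HE. eapply isR_eq. apply (int_prod E (kk i) (kk m) (ph i) (ph m) HE).
  assert (C2 : cos (PI / 2) = 0) by apply cos_PI2.
  assert (Cm2 : cos (- (PI / 2)) = 0) by (rewrite cos_neg; apply cos_PI2).
  destruct (eo_cases i) as [[a ->]|[a ->]]; destruct (eo_cases m) as [[b ->]|[b ->]];
    rewrite ?kk_e, ?kk_o, ?ph_e, ?ph_o.
  - destruct (Nat.eqb_spec a b) as [->|Hab].
    + rewrite Nat.eqb_refl. destruct (Nat.eqb_spec b 0) as [->|Hb].
      * simpl. rewrite Rminus_0_r, Rplus_0_r, cos_0. field.
      * replace (2 * b =? 2 * b)%nat with true by (symmetry; apply Nat.eqb_refl).
        replace (2 * b =? 0)%nat with false by (symmetry; apply Nat.eqb_neq; lia).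
        replace (b + b =? 0)%nat with false by (symmetry; apply Nat.eqb_neq; lia).
        replace (PI / 2 - PI / 2) with 0 by ring. rewrite cos_0. field.
    + replace (2 * a =? 2 * b)%nat with false by (symmetry; apply Nat.eqb_neq; lia).
      replace (a + b =? 0)%nat with false by (symmetry; apply Nat.eqb_neq; lia). field.
  - replace (2 * a =? 2 * b + 1)%nat with false by (symmetry; apply Nat.eqb_neq; lia).
    replace (a + S b =? 0)%nat with false by (symmetry; apply Nat.eqb_neq; lia).
    destruct (Nat.eqb_spec a (S b)) as [->|Hab]; [|field].
    replace (S b =? 0)%nat with false by (symmetry; apply Nat.eqb_neq; lia).
    rewrite Rminus_0_r, C2. field.
  - replace (2 * a + 1 =? 2 * b)%nat with false by (symmetry; apply Nat.eqb_neq; lia).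
    replace (S a + b =? 0)%nat with false by (symmetry; apply Nat.eqb_neq; lia).
    destruct (Nat.eqb_spec (S a) b) as [<-|Hab]; [|field].
    replace (S a =? 0)%nat with false by (symmetry; apply Nat.eqb_neq; lia).
    replace (0 - PI / 2) with (- (PI / 2)) by ring. rewrite Cm2. field.
  - replace (S a + S b =? 0)%nat with false by (symmetry; apply Nat.eqb_neq; lia).
    destruct (Nat.eqb_spec a b) as [->|Hab].
    + rewrite !Nat.eqb_refl. replace (2 * b + 1 =? 0)%nat with false by (symmetry; apply Nat.eqb_neq; lia).
      rewrite Rminus_0_r, cos_0. field.
    + replace (S a =? S b)%nat with false by (symmetry; apply Nat.eqb_neq; lia).
      replace (2 * a + 1 =? 2 * b + 1)%nat with false by (symmetry; apply Nat.eqb_neq; lia). field.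
Qed.

Lemma rsum_mult_r n (g : nat -> R) y : rsum n g * y = rsum n (fun i => g i * y).
Proof. induction n; simpl; [ring|]. rewrite <- IHn. ring. Qed.

Lemma Bs_indep E K (c : nat -> R) : 0 < E ->
  (forall s, 0 <= s <= E -> rsum K (fun i => c i * Bs E i s) = 0) ->
  forall m, (m < K)%nat -> c m = 0.
Proof.
  intros HE Hz m Hm.
  set (G := fun i => if Nat.eqb i m then (if Nat.eqb i 0 then E else E / 2) else 0).
  assert (I1 : is_RInt (fun s => rsum K (fun i => c i * (Bs E i s * Bs E m s))) 0 E
                 (rsum K (fun i => c i * G i))).
  { apply isR_rsum. intros i Hi. apply isR_scal. apply Bs_gram; auto. }
  assert (I2 : is_RInt (fun s => rsum K (fun i => c i * (Bs E i s * Bs E m s))) 0 E 0).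
  { eapply isR_ext; [|lra|eapply isR_eq; [apply (isR_const 0 E 0)|ring]].
    intros x Hx. cbv beta. rewrite (rsum_ext K _ (fun i => c i * Bs E i x * Bs E m x)) by (intros; ring).
    rewrite <- rsum_mult_r, Hz by auto. ring. }
  pose proof (isR_unique _ _ _ _ _ I1 I2) as H.
  rewrite (rsum_ext K _ (fun i => if Nat.eqb i m then c i * G i else 0)) in H.
  - rewrite rsum_ind in H by auto. unfold G in H. rewrite Nat.eqb_refl in H.
    destruct (Nat.eqb m 0); apply Rmult_integral in H; destruct H; auto; lra.
  - intros i Hi. unfold G. destruct (Nat.eqb_spec i m); [auto|ring].
Qed.

Lemma sin_indep T K (d : nat -> R) (mm : nat -> nat) : 0 < T ->
  (forall i, (i < K)%nat -> (1 <= mm i)%nat) ->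
  (forall x, 0 <= x <= T -> rsum K (fun i => d i * sin (INR (mm i) * PI / T * x)) = 0) ->
  forall m0, (1 <= m0)%nat -> rsum K (fun i => if Nat.eqb (mm i) m0 then d i else 0) = 0.
Proof.
  intros HT Hmm Hz m0 Hm0.
  assert (I1 : is_RInt (fun x => rsum K (fun i => d i * (sin (INR (mm i) * PI / T * x) * sin (INR m0 * PI / T * x)))) 0 T
                 (rsum K (fun i => d i * (if Nat.eqb (mm i) m0 then T / 2 else 0)))).
  { apply isR_rsum. intros i Hi. apply isR_scal. apply int_sin_prod; auto. }
  assert (I2 : is_RInt (fun x => rsum K (fun i => d i * (sin (INR (mm i) * PI / T * x) * sin (INR m0 * PI / T * x)))) 0 T 0).
  { eapply isR_ext; [|lra|eapply isR_eq; [apply (isR_const 0 T 0)|ring]].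
    intros x Hx. cbv beta.
    rewrite (rsum_ext K _ (fun i => d i * sin (INR (mm i) * PI / T * x) * sin (INR m0 * PI / T * x))) by (intros; ring).
    rewrite <- rsum_mult_r, Hz by auto. ring. }
  pose proof (isR_unique _ _ _ _ _ I1 I2) as H.
  rewrite (rsum_ext K _ (fun i => T / 2 * (if Nat.eqb (mm i) m0 then d i else 0))) in H.
  - rewrite rsum_scal in H. apply Rmult_integral in H. destruct H; auto. lra.
  - intros i Hi. destruct (Nat.eqb (mm i) m0); ring.
Qed.


Fixpoint findl (P : nat -> bool) (m : nat) : nat :=
  match m with O => O | S m' => if P m' then m' else findl P m' end.

Lemma findl_spec P m : (exists t, (t < m)%nat /\ P t = true) -> (findl P m < m)%nat /\ P (findl P m) = true.
Proof.
  induction m; intros [t [Ht Pt]]; [lia|]. simpl.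
  destruct (P m) eqn:E; [split; auto|].
  destruct (Nat.eq_dec t m) as [->|Hne]; [congruence|].
  destruct IHm as [H1 H2]; [exists t; split; auto; lia|]. split; auto.
Qed.

Lemma tot_len_list n g : tot_len n g = list_sum (map g (seq 0 n)).
Proof.
  induction n; [reflexivity|]. rewrite seq_S, map_app, list_sum_app. simpl tot_len. rewrite IHn.
  simpl. lia.
Qed.

Lemma rsum_two n (P : nat -> bool) (g : nat -> R) a b :
  (a < n)%nat -> (b < n)%nat -> a <> b ->
  (forall k, (k < n)%nat -> P k = true <-> k = a \/ k = b) ->
  rsum n (fun k => if P k then g k else 0) = g a + g b.
Proof.
  intros Ha Hb Hab HP.
  rewrite (rsum_ext n _ (fun k => (if Nat.eqb k a then g k else 0) + (if Nat.eqb k b then g k else 0))).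
  - rewrite rsum_plus, !rsum_ind; auto.
  - intros k Hk. specialize (HP k Hk).
    destruct (P k); destruct (Nat.eqb_spec k a); destruct (Nat.eqb_spec k b); subst; try lra;
      try (exfalso; intuition congruence).
Qed.

Section Cycle.
Variable N : nat.
Variable ell : nat -> nat.
Variable V : nat -> nat.
Hypothesis Hcyc : cycle_graph N V.
Hypothesis Hpos : forall n, (n < N)%nat -> (1 <= ell n)%nat.

Let Lg := fun n => INR (ell n).
Definition w t := walk N V t.
Definition ed t := ep_edge (w t).
Definition elen t := INR (ell (ed t)).
Definition off t := INR (tot_len t (fun u => ell (ed u))).
Definition fw t := Nat.even (w t).
Definition sg t : R := if fw t then 1 else -1.
Definition xs t : R := if fw t then 0 else elen t.
Definition xe t : R := if fw t then elen t else 0.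
Definition Etot : R := INR (tot_len N ell).
Definition tinv n := findl (fun t => Nat.eqb (ed t) n) N.

Lemma HN : (1 <= N)%nat. Proof. destruct Hcyc; auto. Qed.
Lemma Hdeg : forall j, (j < 2 * N)%nat -> degree N V j = 2%nat. Proof. destruct Hcyc as [_ [_ H]]; auto. Qed.
Lemma Hconn : connected_graph N V. Proof. destruct Hcyc as [_ [H _]]; auto. Qed.

Lemma WS : walk N V N = 0%nat /\
  (forall j, (j < 2 * N)%nat -> exists t, (t < N)%nat /\ (j = walk N V t \/ j = eflip (walk N V t))) /\
  (forall t1 t2, (t1 < N)%nat -> (t2 < N)%nat -> ep_edge (walk N V t1) = ep_edge (walk N V t2) -> t1 = t2).
Proof. apply walk_structure. apply Hdeg. apply Hconn. apply HN. Qed.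

Lemma w_lt t : (w t < 2 * N)%nat.
Proof. unfold w, walk. apply (iter_lt N V Hdeg HN). pose proof HN. lia. Qed.

Lemma pinv j : (j < 2 * N)%nat -> partner N V (partner N V j) = j.
Proof. apply (partner_inv N V Hdeg HN). Qed.

Lemma pspec j : (j < 2 * N)%nat ->
  (partner N V j < 2 * N)%nat /\ partner N V j <> j /\ (V (partner N V j) = V j)%nat /\
  (forall k, (k < 2 * N)%nat -> (V k = V j)%nat -> k = j \/ k = partner N V j).
Proof. apply (partner_spec N V Hdeg HN). Qed.

Lemma ed_lt t : (ed t < N)%nat.
Proof. unfold ed. apply (edge_lt N HN), w_lt. Qed.

Lemma wN : w N = 0%nat. Proof. apply (proj1 WS). Qed.

Lemma w_S t : w (S t) = partner N V (eflip (w t)).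
Proof. unfold w, walk. rewrite Nat.iter_succ. reflexivity. Qed.

Lemma ed_inj t1 t2 : (t1 < N)%nat -> (t2 < N)%nat -> ed t1 = ed t2 -> t1 = t2.
Proof. apply (proj2 (proj2 WS)). Qed.

Lemma ed_surj n : (n < N)%nat -> exists t, (t < N)%nat /\ ed t = n.
Proof.
  intros Hn. assert (H2n : (2 * n < 2 * N)%nat) by lia.
  destruct (proj1 (proj2 WS) _ H2n) as [t [Ht [E|E]]]; exists t; split; auto; unfold ed, w.
  - rewrite <- E. unfold ep_edge. apply d2a.
  - rewrite <- (proj1 (proj2 (proj2 (proj2 (eflip_props N (walk N V t) (w_lt t)))))). rewrite <- E.
    unfold ep_edge. apply d2a.
Qed.

Lemma tinv_spec n : (n < N)%nat -> (tinv n < N)%nat /\ ed (tinv n) = n.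
Proof.
  intros Hn. destruct (findl_spec (fun t => Nat.eqb (ed t) n) N) as [H1 H2].
  - destruct (ed_surj n Hn) as [t [Ht Et]]. exists t. split; auto. apply Nat.eqb_eq; auto.
  - split; auto. apply Nat.eqb_eq; auto.
Qed.

Lemma tinv_ed t : (t < N)%nat -> tinv (ed t) = t.
Proof.
  intros Ht. destruct (tinv_spec (ed t) (ed_lt t)) as [H1 H2]. apply ed_inj; auto.
Qed.

Lemma off_0 : off 0 = 0. Proof. reflexivity. Qed.
Lemma off_S t : off (S t) = off t + elen t.
Proof. unfold off, elen. simpl. rewrite plus_INR. reflexivity. Qed.

Lemma off_N : off N = Etot.
Proof.
  unfold off, Etot. f_equal. rewrite !tot_len_list.
  replace (map (fun u => ell (ed u)) (seq 0 N)) with (map ell (map ed (seq 0 N))) by (rewrite map_map; auto).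
  apply Permutation_list_sum. apply Permutation_map.
  apply NoDup_Permutation.
  - apply (nodup_map_seq N HN). intros; apply ed_inj; auto.
  - apply seq_NoDup.
  - intros n. rewrite in_map_iff, in_seq. split.
    + intros [t [<- _]]. pose proof (ed_lt t). lia.
    + intros [_ Hn]. destruct (ed_surj n Hn) as [t [Ht Et]]. exists t. rewrite in_seq. split; auto; lia.
Qed.

Lemma lt_pos t : (t < N)%nat -> 1 <= elen t.
Proof. intros. unfold elen. apply (le_INR 1). apply Hpos, ed_lt. Qed.

Lemma off_mono t1 t2 : (t1 <= t2)%nat -> off t1 <= off t2.
Proof. unfold off. intros. apply le_INR. induction H; simpl; lia. Qed.

Lemma Etot_pos : 0 < Etot.
Proof.
  rewrite <- off_N. pose proof HN. replace N with (S (N - 1)) at 1 by lia. rewrite off_S.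
  pose proof (off_mono 0 (N - 1) ltac:(lia)). rewrite off_0 in H0. pose proof (lt_pos (N - 1) ltac:(lia)). lra.
Qed.

Lemma endpoint_vals (f df : nat -> R -> R) t :
  bval Lg f (w t) = f (ed t) (xs t) /\ bder Lg df (w t) = sg t * df (ed t) (xs t) /\
  bval Lg f (eflip (w t)) = f (ed t) (xe t) /\ bder Lg df (eflip (w t)) = - sg t * df (ed t) (xe t).
Proof.
  unfold bval, bder, ep_pos, xs, xe, sg, fw, elen, ed, Lg, eflip, ep_edge.
  destruct (eo_cases (w t)) as [[q ->]|[q ->]].
  - replace (S (2 * q)) with (2 * q + 1)%nat by lia. rewrite ?eva, ?evb, ?d2a, ?d2b.
    repeat split; cbv beta; try reflexivity; try ring.
  - replace (pred (2 * q + 1)) with (2 * q)%nat by lia. rewrite ?eva, ?evb, ?d2a, ?d2b.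
    repeat split; cbv beta; try reflexivity; try ring.
all: rewrite ?eva, ?evb, ?d2a, ?d2b; cbv beta; try reflexivity; try ring.
Qed.

Lemma sg_sq t : sg t * sg t = 1.
Proof. unfold sg. destruct (fw t); ring. Qed.

Lemma xe_xs t : sg t * (xe t - xs t) = elen t.
Proof. unfold sg, xe, xs. destruct (fw t); ring. Qed.

Lemma xs_in t : 0 <= xs t <= elen t /\ 0 <= xe t <= elen t.
Proof.
  assert (0 <= elen t) by (unfold elen; apply pos_INR).
  unfold xs, xe. destruct (fw t); lra.
Qed.

Lemma classify j : (j < 2 * N)%nat -> exists t, (t < N)%nat /\
  ((j = eflip (w t) /\ partner N V j = w (S t)) \/ (j = w (S t) /\ partner N V j = eflip (w t))).
Proof.
  intros Hj.
  assert (Hpi : forall t, partner N V (w (S t)) = eflip (w t)).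
  { intros t. rewrite w_S. apply pinv. apply eflip_props, w_lt. }
  destruct (proj1 (proj2 WS) j Hj) as [t' [Ht' [E|E]]]; fold (w t') in E.
  - destruct t' as [|t].
    + exists (N - 1)%nat. split; [pose proof HN; lia|]. right.
      assert (HwS : w (S (N - 1)) = w 0).
      { replace (S (N - 1)) with N by (pose proof HN; lia). rewrite wN. reflexivity. }
      split; [rewrite HwS; auto|]. rewrite E, <- HwS. apply Hpi.
    + exists t. split; [lia|]. right. split; auto. subst. apply Hpi.
  - exists t'. split; auto. left. split; auto. subst. rewrite w_S. reflexivity.
Qed.

Definition match_at (f df : nat -> R -> R) (Phi dPhi : R -> R) t :=
  forall x, 0 <= x <= elen t ->
    f (ed t) x = Phi (off t + sg t * (x - xs t)) /\ df (ed t) x = sg t * dPhi (off t + sg t * (x - xs t)).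

Definition matches f df Phi dPhi := forall t, (t < N)%nat -> match_at f df Phi dPhi t.

Lemma match_ends f df Phi dPhi t : match_at f df Phi dPhi t ->
  bval Lg f (w t) = Phi (off t) /\ bder Lg df (w t) = dPhi (off t) /\
  bval Lg f (eflip (w t)) = Phi (off (S t)) /\ bder Lg df (eflip (w t)) = - dPhi (off (S t)).
Proof.
  intros HM. destruct (endpoint_vals f df t) as [E1 [E2 [E3 E4]]].
  destruct (xs_in t) as [X1 X2].
  destruct (HM (xs t) X1) as [M1 M2]. destruct (HM (xe t) X2) as [M3 M4].
  rewrite E1, E2, E3, E4, M1, M2, M3, M4.
  rewrite xe_xs, off_S. replace (xs t - xs t) with 0 by ring. rewrite Rmult_0_r, Rplus_0_r.
  repeat split; try ring_simplify; auto.
  all: replace (sg t ^ 2) with (sg t * sg t) by ring; rewrite sg_sq; ring.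
Qed.

Lemma start_vals f df Phi dPhi t : matches f df Phi dPhi -> (t < N)%nat ->
  Phi Etot = Phi 0 -> dPhi Etot = dPhi 0 ->
  bval Lg f (w (S t)) = Phi (off (S t)) /\ bder Lg df (w (S t)) = dPhi (off (S t)).
Proof.
  intros HM Ht HP HdP. destruct (Nat.eq_dec (S t) N) as [E|E].
  - rewrite E, wN, off_N, HP, HdP. rewrite <- off_0. fold (w 0).
    destruct (match_ends f df Phi dPhi 0 (HM 0%nat ltac:(lia))) as [A [B _]]. auto.
  - destruct (match_ends f df Phi dPhi (S t) (HM (S t) ltac:(lia))) as [A [B _]]. auto.
Qed.

Lemma std_of_match f df Phi dPhi : matches f df Phi dPhi ->
  Phi Etot = Phi 0 -> dPhi Etot = dPhi 0 -> standard_cond N Lg V f df.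
Proof.
  intros HM HP HdP.
  assert (Hpv : forall j, (j < 2 * N)%nat ->
    bval Lg f (partner N V j) = bval Lg f j /\ bder Lg df (partner N V j) = - bder Lg df j).
  { intros j Hj. destruct (classify j Hj) as [t [Ht [[E1 E2]|[E1 E2]]]]; rewrite E2, E1;
      destruct (match_ends f df Phi dPhi t (HM t Ht)) as [_ [_ [A B]]];
      destruct (start_vals f df Phi dPhi t HM Ht HP HdP) as [C D];
      rewrite A, B, C, D; split; ring. }
  split.
  - intros j k Hj Hk HV. destruct (proj2 (proj2 (proj2 (pspec j Hj))) k Hk (eq_sym HV)) as [E|E];
      subst k; auto. symmetry. apply Hpv; auto.
  - intros j Hj. destruct (pspec j Hj) as [P1 [P2 [P3 P4]]].
    rewrite (rsum_two (2 * N) (fun k => Nat.eqb (V k) (V j)) (bder Lg df) j (partner N V j)); auto.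
    + rewrite (proj2 (Hpv j Hj)). ring.
    + intros k Hk. rewrite Nat.eqb_eq. split; [apply P4; auto|].
      intros [E|E]; subst k; auto.
Qed.

Lemma d_aff (Phi dPhi : R -> R) (o s x0 x : R) : (forall y, is_derive Phi y (dPhi y)) ->
  is_derive (fun x => Phi (o + s * (x - x0))) x (s * dPhi (o + s * (x - x0))).
Proof.
  intros H. apply (isd_ext (fun x => Phi (s * x + (o - s * x0)))).
  - intros; f_equal; ring.
  - eapply isd_eq. apply d_lin. apply H. f_equal. f_equal. ring.
Qed.

Definition gfun (Phi : R -> R) n x := Phi (off (tinv n) + sg (tinv n) * (x - xs (tinv n))).
Definition gdfun (dPhi : R -> R) n x := sg (tinv n) * dPhi (off (tinv n) + sg (tinv n) * (x - xs (tinv n))).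

Lemma gfun_matches Phi dPhi : matches (gfun Phi) (gdfun dPhi) Phi dPhi.
Proof. intros t Ht x Hx. unfold gfun, gdfun. rewrite tinv_ed; auto. Qed.

Lemma std_eigen (lam : R) (Phi dPhi ddPhi : R -> R) :
  (forall s, is_derive Phi s (dPhi s)) -> (forall s, is_derive dPhi s (ddPhi s)) ->
  (forall s, ddPhi s = - lam * Phi s) -> Phi Etot = Phi 0 -> dPhi Etot = dPhi 0 ->
  eigenfun N Lg (standard_cond N Lg V) lam (gfun Phi) (gdfun dPhi) (gfun ddPhi).
Proof.
  intros H1 H2 H3 HP HdP. split; [|split].
  - intros n x. split; apply D2R.
    + unfold gfun, gdfun. apply d_aff; auto.
    + unfold gdfun, gfun. eapply isd_eq.
      apply (d_scal (fun x => dPhi (off (tinv n) + sg (tinv n) * (x - xs (tinv n))))). apply d_aff; auto.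
      rewrite <- Rmult_assoc, sg_sq. ring.
  - intros n x _ _. unfold gfun. rewrite H3. ring.
  - apply (std_of_match (gfun Phi) (gdfun dPhi) Phi dPhi); auto. apply gfun_matches.
Qed.


Lemma std_partner f df : standard_cond N Lg V f df -> forall j, (j < 2 * N)%nat ->
  bval Lg f (partner N V j) = bval Lg f j /\ bder Lg df (partner N V j) = - bder Lg df j.
Proof.
  intros [Hc Hk] j Hj. destruct (pspec j Hj) as [P1 [P2 [P3 P4]]]. split.
  - apply Hc; auto.
  - specialize (Hk j Hj).
    rewrite (rsum_two (2 * N) (fun k => Nat.eqb (V k) (V j)) (bder Lg df) j (partner N V j)) in Hk; auto.
    + lra.
    + intros k Hk'. rewrite Nat.eqb_eq. split; [apply P4; auto|].
      intros [E|E]; subst k; auto.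
Qed.

Lemma std_prop lam f df ddf : eigenfun N Lg (standard_cond N Lg V) lam f df ddf ->
  matches f df (Phi lam (bval Lg f (w 0)) (bder Lg df (w 0))) (dPhi lam (bval Lg f (w 0)) (bder Lg df (w 0))) /\
  Phi lam (bval Lg f (w 0)) (bder Lg df (w 0)) Etot = Phi lam (bval Lg f (w 0)) (bder Lg df (w 0)) 0 /\
  dPhi lam (bval Lg f (w 0)) (bder Lg df (w 0)) Etot = dPhi lam (bval Lg f (w 0)) (bder Lg df (w 0)) 0.
Proof.
  intros [Hd [Hode Hst]].
  set (A := bval Lg f (w 0)). set (B := bder Lg df (w 0)).
  set (P := Phi lam A B). set (dP := dPhi lam A B).
  assert (HP : forall s, is_derive P s (dP s)) by (intros; apply Phi_deriv).
  assert (HdP : forall s, is_derive dP s (- lam * P s)) by (intros; apply Phi_deriv).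
  assert (H0 : P 0 = A /\ dP 0 = B).
  { destruct (CS_0 lam) as [C0 S0]. unfold P, dP, Phi, dPhi. rewrite C0, S0. split; ring. }
  assert (Hind : forall t, (t <= N)%nat -> (forall u, (u < t)%nat -> match_at f df P dP u) /\
            bval Lg f (w t) = P (off t) /\ bder Lg df (w t) = dP (off t)).
  { induction t; intros Ht.
    - split; [intros; lia|]. rewrite off_0. destruct H0. split; auto.
    - destruct (IHt ltac:(lia)) as [IHm [Hv Hb]].
      assert (Hm : match_at f df P dP t).
      { intros x Hx.
        set (h := fun x => f (ed t) x - P (off t + sg t * (x - xs t))).
        set (dh := fun x => df (ed t) x - sg t * dP (off t + sg t * (x - xs t))).
        set (ddh := fun x => ddf (ed t) x - sg t * (sg t * (- lam * P (off t + sg t * (x - xs t))))).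
        destruct (endpoint_vals f df t) as [E1 [E2 _]].
        destruct (xs_in t) as [X1 _].
        assert (Hz : h x = 0 /\ dh x = 0).
        { apply (ode_uniq lam h dh ddh 0 (elen t) (xs t)); auto.
          - intros y. apply D2R. apply (d_minus (f (ed t)) (fun x => P (off t + sg t * (x - xs t)))).
            apply R2D, Hd. apply d_aff; auto.
          - intros y. apply D2R. apply (d_minus (df (ed t)) (fun x => sg t * dP (off t + sg t * (x - xs t)))).
            apply R2D, Hd. apply d_scal. apply (d_aff dP (fun s => - lam * P s)); auto.
          - intros y Hy. unfold ddh, h. rewrite <- Rmult_assoc, sg_sq.
            assert (- ddf (ed t) y = lam * f (ed t) y) by (apply Hode; [apply ed_lt|exact Hy]). lra.
          - unfold h. rewrite <- E1, Hv. replace (xs t - xs t) with 0 by ring. rewrite Rmult_0_r, Rplus_0_r. ring.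
          - unfold dh. replace (xs t - xs t) with 0 by ring. rewrite Rmult_0_r, Rplus_0_r, <- Hb, E2.
            rewrite <- Rmult_assoc, sg_sq. ring. }
        unfold h, dh in Hz. destruct Hz. split; lra. }
      destruct (match_ends f df P dP t Hm) as [_ [_ [F1 F2]]].
      assert (Hj : (eflip (w t) < 2 * N)%nat) by (apply eflip_props, w_lt).
      destruct (std_partner f df Hst (eflip (w t)) Hj) as [G1 G2].
      rewrite <- w_S in G1, G2. split; [|split].
      + intros u Hu. destruct (Nat.eq_dec u t) as [->|Hne]; auto. apply IHm. lia.
      + rewrite G1, F1. auto.
      + rewrite G2, F2. ring. }
  destruct (Hind N (le_n N)) as [Hm [Hv Hb]].
  replace (w N) with (w 0) in Hv, Hb by (rewrite wN; reflexivity). rewrite off_N in Hv, Hb.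
  fold A in Hv. fold B in Hb. destruct H0 as [H0a H0b].
  split; [intros t Ht; apply Hm; auto|]. split; congruence.
Qed.


Lemma cover s : 0 <= s <= Etot -> exists t, (t < N)%nat /\ off t <= s <= off (S t).
Proof.
  intros Hs. rewrite <- off_N in Hs.
  assert (G : forall m, (1 <= m)%nat -> 0 <= s <= off m -> exists t, (t < m)%nat /\ off t <= s <= off (S t)).
  { induction m; intros Hm Hsm; [lia|].
    destruct (Nat.eq_dec m 0) as [->|Hm0].
    - exists 0%nat. rewrite off_0. split; [lia|lra].
    - destruct (Rle_dec s (off m)) as [Hle|Hgt].
      + destruct (IHm ltac:(lia) ltac:(lra)) as [t [Ht Hts]]. exists t. split; [lia|auto].
      + exists m. split; [lia|]. lra. }
  apply G; auto. apply HN.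
Qed.

Lemma gfun_at t s : (t < N)%nat -> off t <= s <= off (S t) ->
  exists x, 0 <= x <= Lg (ed t) /\ forall Phi, gfun Phi (ed t) x = Phi s.
Proof.
  intros Ht Hs. rewrite off_S in Hs. exists (xs t + sg t * (s - off t)).
  unfold gfun. rewrite tinv_ed by auto. split.
  - unfold Lg. fold (elen t). unfold xs, sg. destruct (fw t); lra.
  - intros Phi. f_equal. replace (xs t + sg t * (s - off t) - xs t) with (sg t * (s - off t)) by ring.
    rewrite <- Rmult_assoc, sg_sq. ring.
Qed.


Definition Enat := tot_len N ell.
Definition lamstar := (PI * (Etot + 1) / Etot) * (PI * (Etot + 1) / Etot).

Lemma std_count : count_ge N Lg (standard_cond N Lg V) lamstar (S Enat).
Proof.
  pose proof Etot_pos as HE. assert (HP := PI_RGT_0).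
  exists (fun i => kap Etot i * kap Etot i), (fun i => gfun (Bs Etot i)), (fun i => gdfun (dBs Etot i)),
    (fun i => gfun (fun s => - (kap Etot i * kap Etot i) * Bs Etot i s)).
  split.
  - intros i Hi. split.
    + assert (Hk : 0 <= kap Etot i <= PI * (Etot + 1) / Etot).
      { unfold kap. assert (H2 : 2 * INR (kk i) <= Etot + 1).
        { unfold Etot. rewrite <- S_INR. replace 2 with (INR 2) by reflexivity. rewrite <- mult_INR.
          apply le_INR. unfold kk. pose proof (Nat.mul_div_le (S i) 2). fold Enat. lia. }
        pose proof (pos_INR (kk i)). split.
        - apply Rmult_le_pos; [|left; apply Rinv_0_lt_compat; auto]. nra.
        - unfold Rdiv. apply Rmult_le_compat_r; [left; apply Rinv_0_lt_compat; auto|]. nra. }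
      unfold lamstar. apply Rmult_le_compat; lra.
    + apply std_eigen.
      * intros s. apply Bs_deriv.
      * intros s. apply Bs_deriv.
      * intros s. ring.
      * apply Bs_per; auto.
      * apply Bs_per; auto.
  - intros c Hc. apply (Bs_indep Etot (S Enat) c HE).
    intros s Hs. destruct (cover s Hs) as [t [Ht Hts]].
    destruct (gfun_at t s Ht Hts) as [x [Hx Hg]].
    rewrite <- (Hc (ed t) x (ed_lt t) Hx). apply rsum_ext. intros i _. rewrite Hg. reflexivity.
Qed.


Lemma Bs_0 s : Bs Etot 0 s = 1.
Proof. unfold Bs, kap, ph, kk. simpl. replace (2 * PI * 0 / Etot * s - 0) with 0 by (pose proof Etot_pos; field; lra). apply cos_0. Qed.

Lemma std_span (Hodd : Nat.odd Enat = true) lam f df ddf : lam < lamstar ->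
  eigenfun N Lg (standard_cond N Lg V) lam f df ddf ->
  exists a : nat -> R, forall n x, (n < N)%nat -> 0 <= x <= Lg n ->
    f n x = lsum (seq 0 Enat) (fun y => a y * gfun (Bs Etot y) n x).
Proof.
  intros Hlam Heig. pose proof Etot_pos as HE. assert (HPI := PI_RGT_0).
  destruct (std_prop lam f df ddf Heig) as [HM [HP HdP]].
  set (A := bval Lg f (w 0)) in *. set (B := bder Lg df (w 0)) in *.
  assert (Hf : forall n x, (n < N)%nat -> 0 <= x <= Lg n -> f n x = gfun (Phi lam A B) n x).
  { intros n x Hn Hx. destruct (tinv_spec n Hn) as [T1 T2].
    assert (Hx' : 0 <= x <= elen (tinv n)) by (unfold elen; rewrite T2; exact Hx).
    destruct (HM (tinv n) T1 x Hx') as [M _]. rewrite T2 in M. rewrite M. reflexivity. }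
  assert (HEn : (0 < Enat)%nat).
  { apply INR_lt. simpl. exact HE. }
  destruct (wrap lam A B Etot HE HP HdP) as [[HA HB]|[[Hl HB]|[Hl Hc]]].
  - exists (fun _ => 0). intros n x Hn Hx. rewrite Hf by auto.
    rewrite lsum_zero; [|intros; ring]. unfold gfun, Phi. rewrite HA, HB. ring.
  - destruct (lsum_pick Nat.eq_dec (seq 0 Enat) 0%nat) as [a Ha]; [apply in_seq; lia|].
    exists (fun y => A * a y). intros n x Hn Hx. rewrite Hf by auto.
    rewrite (lsum_ext _ _ (fun y => A * (a y * gfun (Bs Etot y) n x))) by (intros; ring).
    rewrite lsum_scal, Ha. unfold gfun, Phi. rewrite Bs_0, HB, Hl. unfold Cf.
    destruct (Rlt_dec 0 0); [lra|]. destruct (Rlt_dec 0 0); [lra|]. ring.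
  - destruct (cos_eq_1_Z _ Hc) as [m Hm].
    assert (Hr : 0 < sqrt lam) by (apply sqrt_lt_R0; auto).
    assert (Hm0 : (0 < m)%Z).
    { apply lt_IZR. assert (0 < sqrt lam * Etot) by nra. rewrite Hm in H. nra. }
    set (q := Z.to_nat m).
    assert (Hq : INR q = IZR m) by (unfold q; rewrite INR_IZR_INZ, Z2Nat.id; [reflexivity|lia]).
    assert (Hsq : sqrt lam = 2 * PI * INR q / Etot) by (rewrite Hq; apply Rmult_eq_reg_r with Etot; [|lra]; rewrite Hm; field; lra).
    assert (Hq1 : (1 <= q)%nat) by (unfold q; lia).
    assert (Hbound : sqrt lam < PI * (Etot + 1) / Etot).
    { assert (0 < PI * (Etot + 1) / Etot) by (apply Rdiv_lt_0_compat; nra).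
      destruct (Rlt_or_le (sqrt lam) (PI * (Etot + 1) / Etot)) as [|Hge]; auto.
      exfalso. assert (lamstar <= lam). { unfold lamstar. rewrite <- (sqrt_sqrt lam) by lra.
        apply Rmult_le_compat; lra. } lra. }
    assert (H2q : (2 * q < Enat)%nat).
    { assert (H2 : (2 * q < S Enat)%nat).
      { assert (Hlt : 2 * INR q < Etot + 1).
        { rewrite Hsq in Hbound.
          apply Rmult_lt_reg_r with (PI / Etot); [apply Rdiv_lt_0_compat; lra|].
          replace (2 * INR q * (PI / Etot)) with (2 * PI * INR q / Etot) by (field; lra).
          replace ((Etot + 1) * (PI / Etot)) with (PI * (Etot + 1) / Etot) by (field; lra).
          exact Hbound. }
        apply INR_lt. replace (INR (2 * q)) with (2 * INR q) by (rewrite mult_INR; simpl; ring).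
        replace (INR (S Enat)) with (Etot + 1) by (rewrite S_INR; reflexivity). exact Hlt. }
      assert (2 * q <> Enat)%nat.
      { intro E2. rewrite <- E2 in Hodd. rewrite Nat.odd_mul in Hodd. discriminate. }
      lia. }
    set (y1 := (2 * (q - 1) + 1)%nat). set (y2 := (2 * q)%nat).
    assert (B1 : forall s, Bs Etot y1 s = cos (sqrt lam * s)).
    { intros s. unfold Bs, y1, kap. rewrite kk_o, ph_o. replace (S (q - 1)) with q by lia.
      rewrite Hsq. f_equal. ring. }
    assert (B2 : forall s, Bs Etot y2 s = sin (sqrt lam * s)).
    { intros s. unfold Bs, y2, kap. rewrite kk_e, ph_e. replace (q =? 0)%nat with false by (symmetry; apply Nat.eqb_neq; lia).
      rewrite cos_minus, cos_PI2, sin_PI2, Hsq. ring. }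
    destruct (lsum_combo2 Nat.eq_dec (seq 0 Enat) y1 y2 A (B / sqrt lam)) as [a Ha];
      try (apply in_seq; unfold y1, y2; lia).
    exists a. intros n x Hn Hx. rewrite Hf by auto. rewrite Ha. unfold gfun, Phi, Cf, Sf.
    destruct (Rlt_dec 0 lam); [|lra]. rewrite B1, B2. unfold Rdiv. ring.
Qed.


Lemma choice_lt (k : nat) (P : nat -> (nat -> R) -> Prop) :
  (forall i, (i < k)%nat -> exists a, P i a) -> exists A : nat -> nat -> R, forall i, (i < k)%nat -> P i (A i).
Proof.
  intros H.
  assert (H' : forall i, exists a, (i < k)%nat -> P i a).
  { intros i. destruct (lt_dec i k) as [Hi|Hi].
    - destruct (H i Hi) as [a Ha]. exists a; auto.
    - exists (fun _ => 0). intros; lia. }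
  exists (fun i => proj1_sig (constructive_indefinite_description _ (H' i))).
  intros i Hi. exact (proj2_sig (constructive_indefinite_description _ (H' i)) Hi).
Qed.

Lemma std_notcount (Hodd : Nat.odd Enat = true) mu : mu < lamstar ->
  ~ count_ge N Lg (standard_cond N Lg V) mu (S Enat).
Proof.
  intros Hmu [lams [fs [dfs [ddfs [Heig Hind]]]]].
  destruct (choice_lt (S Enat) (fun i a => forall n x, (n < N)%nat -> 0 <= x <= Lg n ->
      fs i n x = lsum (seq 0 Enat) (fun y => a y * gfun (Bs Etot y) n x))) as [A HA].
  { intros i Hi. destruct (Heig i Hi) as [Hl He].
    apply (std_span Hodd (lams i) (fs i) (dfs i) (ddfs i)); auto; lra. }
  destruct (span_dep Nat.eq_dec (seq 0 Enat) (S Enat) fs (fun y => gfun (Bs Etot y)) A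
              (fun n x => (n < N)%nat /\ 0 <= x <= Lg n)) as [c [[i [Hi Hci]] Hc]].
  - rewrite length_seq. lia.
  - intros i n x Hi [Hn Hx]. apply HA; auto.
  - apply Hci. apply (Hind c); [intros n x Hn Hx; apply Hc; auto | exact Hi].
Qed.

End Cycle.

Fixpoint findl2 (P : nat -> bool) (m : nat) : nat :=
  match m with O => O | S m' => if P m' then m' else findl2 P m' end.

Lemma findl2_spec P m : (exists t, (t < m)%nat /\ P t = true) -> (findl2 P m < m)%nat /\ P (findl2 P m) = true.
Proof.
  induction m; intros [t [Ht Pt]]; [lia|]. simpl.
  destruct (P m) eqn:E; [split; auto|].
  destruct (Nat.eq_dec t m) as [->|Hne]; [congruence|].
  destruct IHm as [H1 H2]; [exists t; split; auto; lia|]. split; auto.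
Qed.

Lemma findl2_last P m : forall t, (findl2 P m < t)%nat -> (t < m)%nat -> P t = false.
Proof.
  induction m; intros t H1 H2; [lia|]. simpl in H1. destruct (P m) eqn:E; [lia|].
  destruct (Nat.eq_dec t m) as [->|Hne]; auto. apply IHm; auto; lia.
Qed.

Lemma choice_gen {T : Type} (d : T) (k : nat) (P : nat -> T -> Prop) :
  (forall i, (i < k)%nat -> exists a, P i a) -> exists A : nat -> T, forall i, (i < k)%nat -> P i (A i).
Proof.
  intros H.
  assert (H' : forall i, exists a, (i < k)%nat -> P i a).
  { intros i. destruct (lt_dec i k) as [Hi|Hi].
    - destruct (H i Hi) as [a Ha]. exists a; auto.
    - exists d. intros; lia. }
  exists (fun i => proj1_sig (constructive_indefinite_description _ (H' i))).
  intros i Hi. exact (proj2_sig (constructive_indefinite_description _ (H' i)) Hi).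
Qed.

Lemma sin_nat_PI (m : nat) : sin (INR m * PI) = 0.
Proof. rewrite INR_IZR_INZ. apply sin_intPI. Qed.

Section Dir.
Variable N : nat.
Variable ell : nat -> nat.
Variable V : nat -> nat.
Hypothesis HN : (1 <= N)%nat.
Hypothesis Hpos : forall n, (n < N)%nat -> (1 <= ell n)%nat.

Let Lg := fun n => INR (ell n).
Definition cum n := tot_len n ell.
Definition dn i := findl2 (fun n => Nat.leb (cum n) i) N.
Definition dm i := S (i - cum (dn i)).
Definition Ed := tot_len N ell.

Lemma cum_S n : cum (S n) = (cum n + ell n)%nat. Proof. reflexivity. Qed.


Lemma dec_spec i : (i < Ed)%nat ->
  (dn i < N)%nat /\ (cum (dn i) <= i)%nat /\ (i < cum (S (dn i)))%nat /\
  (1 <= dm i)%nat /\ (dm i <= ell (dn i))%nat.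
Proof.
  intros Hi. destruct (findl2_spec (fun n => Nat.leb (cum n) i) N) as [H1 H2].
  - exists 0%nat. split; [lia|]. apply Nat.leb_le. unfold cum. simpl. lia.
  - fold (dn i) in H1, H2. apply Nat.leb_le in H2.
    assert (H3 : (i < cum (S (dn i)))%nat).
    { destruct (Nat.eq_dec (S (dn i)) N) as [E|E].
      - rewrite E. exact Hi.
      - pose proof (findl2_last (fun n => Nat.leb (cum n) i) N (S (dn i)) ltac:(unfold dn; lia) ltac:(lia)).
        apply Nat.leb_gt in H. auto. }
    rewrite cum_S in H3. unfold dm. repeat split; auto; lia.
Qed.

Lemma dec_inj i i' : (i < Ed)%nat -> (i' < Ed)%nat -> dn i = dn i' -> dm i = dm i' -> i = i'.
Proof.
  intros Hi Hi' E1 E2. pose proof (dec_spec i Hi). pose proof (dec_spec i' Hi').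
  unfold dm in E2. rewrite E1 in *. lia.
Qed.

Definition freq i := INR (dm i) * PI / Lg (dn i).
Definition dfs_ i n x := if Nat.eqb n (dn i) then sin (freq i * x) else 0.
Definition ddfs_ i n x := if Nat.eqb n (dn i) then freq i * cos (freq i * x) else 0.
Definition dddfs_ i n x := if Nat.eqb n (dn i) then - (freq i * freq i) * sin (freq i * x) else 0.

Lemma Lg_pos n : (n < N)%nat -> 1 <= Lg n.
Proof. intros. unfold Lg. apply (le_INR 1). auto. Qed.

Lemma dir_count : count_ge N Lg (dirichlet_cond N Lg V) (PI * PI) Ed.
Proof.
  assert (HP := PI_RGT_0).
  exists (fun i => freq i * freq i), dfs_, ddfs_, dddfs_. split.
  - intros i Hi. destruct (dec_spec i Hi) as [D1 [D2 [D3 [D4 D5]]]].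
    pose proof (Lg_pos _ D1) as HL.
    assert (Hf : 0 <= freq i <= PI).
    { unfold freq. split.
      - apply Rmult_le_pos; [apply Rmult_le_pos; [apply pos_INR|lra]|left; apply Rinv_0_lt_compat; lra].
      - apply Rmult_le_reg_r with (Lg (dn i)); [lra|]. unfold Rdiv. rewrite Rmult_assoc, Rinv_l by lra.
        rewrite Rmult_1_r, Rmult_comm. apply Rmult_le_compat_l; [lra|]. apply le_INR. auto. }
    split; [apply Rmult_le_compat; lra|]. split; [|split].
    + intros n x. unfold dfs_, ddfs_, dddfs_. destruct (Nat.eqb n (dn i)); split; apply D2R.
      * eapply isd_eq. apply (d_fk sin x (freq i)), d_sin. ring.
      * eapply isd_eq. apply d_scal. apply (d_fk cos x (freq i)), d_cos. ring.
      * apply d_const.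
      * apply d_const.
    + intros n x _ _. unfold dfs_, dddfs_. destruct (Nat.eqb n (dn i)); ring.
    + intros j Hj. unfold bval, dfs_, ep_pos. destruct (Nat.eqb_spec (ep_edge j) (dn i)) as [E|E]; auto.
      destruct (Nat.even j).
      * rewrite Rmult_0_r. apply sin_0.
      * unfold ep_edge in E. rewrite E. unfold freq. fold (Lg (dn i)).
        replace (INR (dm i) * PI / Lg (dn i) * Lg (dn i)) with (INR (dm i) * PI) by (field; lra).
        apply sin_nat_PI.
  - intros c Hc i0 Hi0. destruct (dec_spec i0 Hi0) as [D1 [D2 [D3 [D4 D5]]]].
    pose proof (Lg_pos _ D1) as HL. set (n0 := dn i0) in *.
    set (d := fun i => if Nat.eqb n0 (dn i) then c i else 0).
    set (mm := fun i => if Nat.eqb n0 (dn i) then dm i else 1%nat).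
    assert (Hsi := sin_indep (Lg n0) Ed d mm ltac:(lra)).
    assert (H1 : forall i, (i < Ed)%nat -> (1 <= mm i)%nat).
    { intros i Hi. unfold mm. destruct (Nat.eqb n0 (dn i)); [apply dec_spec|]; auto. }
    assert (H2 : forall x, 0 <= x <= Lg n0 -> rsum Ed (fun i => d i * sin (INR (mm i) * PI / Lg n0 * x)) = 0).
    { intros x Hx. rewrite <- (Hc n0 x D1 Hx). apply rsum_ext. intros i Hi.
      unfold d, mm, dfs_, freq. destruct (Nat.eqb_spec n0 (dn i)) as [E|E].
      - rewrite E. reflexivity.
      - ring. }
    specialize (Hsi H1 H2 (dm i0) D4).
    rewrite (rsum_ext Ed _ (fun i => if Nat.eqb i i0 then c i else 0)) in Hsi.
    + rewrite rsum_ind in Hsi; auto.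
    + intros i Hi. unfold d, mm. destruct (Nat.eqb_spec n0 (dn i)) as [E|E].
      * destruct (Nat.eqb_spec (dm i) (dm i0)) as [E'|E'].
        -- assert (i = i0) by (apply dec_inj; auto). subst. rewrite Nat.eqb_refl. auto.
        -- destruct (Nat.eqb_spec i i0); [subst; congruence|auto].
      * destruct (Nat.eqb_spec i i0) as [->|Hne]; [exfalso; apply E; reflexivity|].
        destruct (Nat.eqb 1 (dm i0)); reflexivity.
Qed.


Lemma dir_edge lam f df ddf : eigenfun N Lg (dirichlet_cond N Lg V) lam f df ddf -> lam < PI * PI ->
  forall n, (n < N)%nat -> exists p : R * nat,
    (fst p = 0 \/ (1 <= snd p /\ snd p <= ell n - 1)%nat) /\
    forall x, 0 <= x <= Lg n -> f n x = fst p * sin (INR (snd p) * PI / Lg n * x).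
Proof.
  intros [Hd [Hode Hbc]] Hlam n Hn. assert (HP := PI_RGT_0).
  pose proof (Lg_pos n Hn) as HL.
  assert (F0 : f n 0 = 0).
  { pose proof (Hbc (2 * n)%nat ltac:(lia)) as H. unfold bval, ep_pos, ep_edge in H.
    rewrite eva, d2a in H. exact H. }
  assert (FL : f n (Lg n) = 0).
  { pose proof (Hbc (2 * n + 1)%nat ltac:(lia)) as H. unfold bval, ep_pos, ep_edge in H.
    rewrite evb, d2b in H. exact H. }
  set (d0 := df n 0).
  assert (Hrep : forall x, 0 <= x <= Lg n -> f n x = d0 * Sf lam x).
  { intros x Hx.
    set (h := fun x => f n x - (f n 0 * Cf lam x + d0 * Sf lam x)).
    set (dh := fun x => df n x - (f n 0 * (- lam * Sf lam x) + d0 * Cf lam x)).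
    set (ddh := fun x => ddf n x - (f n 0 * (- lam * Cf lam x) + d0 * (- lam * Sf lam x))).
    assert (Hz : h x = 0 /\ dh x = 0).
    { apply (ode_uniq lam h dh ddh 0 (Lg n) 0); auto; try lra.
      - intros y. apply D2R. apply (d_minus (f n) (fun x => f n 0 * Cf lam x + d0 * Sf lam x)).
        apply R2D, Hd. apply (d_plus (fun x => f n 0 * Cf lam x) (fun x => d0 * Sf lam x));
          apply d_scal; apply CS_deriv.
      - intros y. apply D2R.
        apply (d_minus (df n) (fun x => f n 0 * (- lam * Sf lam x) + d0 * Cf lam x)).
        apply R2D, Hd. apply (d_plus (fun x => f n 0 * (- lam * Sf lam x)) (fun x => d0 * Cf lam x));
          apply d_scal; [apply d_scal|]; apply CS_deriv.
      - intros y Hy. unfold ddh, h. assert (- ddf n y = lam * f n y) by (apply Hode; auto). lra.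
      - unfold h. destruct (CS_0 lam) as [C0 S0]. rewrite C0, S0. ring.
      - unfold dh, d0. destruct (CS_0 lam) as [C0 S0]. rewrite C0, S0. ring. }
    unfold h in Hz. destruct Hz as [Hz _]. rewrite F0 in Hz. lra. }
  destruct (Req_dec d0 0) as [Hd0|Hd0].
  - exists (0, 1%nat). split; [left; reflexivity|]. intros x Hx. rewrite Hrep by auto. simpl.
    rewrite Hd0. ring.
  - assert (HS : Sf lam (Lg n) = 0).
    { rewrite Hrep in FL by lra. apply Rmult_integral in FL. destruct FL; [contradiction|auto]. }
    unfold Sf in HS. destruct (Rlt_dec 0 lam) as [Hl|Hl].
    + assert (Hr : 0 < sqrt lam) by (apply sqrt_lt_R0; auto).
      assert (Hs : sin (sqrt lam * Lg n) = 0).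
      { unfold Rdiv in HS. apply Rmult_integral in HS. destruct HS as [HS|HS]; auto.
        apply Rinv_neq_0_compat in HS; [contradiction|lra]. }
      destruct (sin_eq_0_0 _ Hs) as [k Hk].
      assert (Hrp : sqrt lam < PI).
      { destruct (Rlt_or_le (sqrt lam) PI) as [|Hge]; auto. exfalso.
        assert (PI * PI <= lam) by (rewrite <- (sqrt_sqrt lam) by lra; apply Rmult_le_compat; lra). lra. }
      assert (Hk0 : (0 < k)%Z).
      { apply lt_IZR. assert (0 < sqrt lam * Lg n) by nra. rewrite Hk in H. nra. }
      set (kn := Z.to_nat k).
      assert (Hkn : INR kn = IZR k) by (unfold kn; rewrite INR_IZR_INZ, Z2Nat.id; [reflexivity|lia]).
      assert (Hkl : (kn < ell n)%nat).
      { apply INR_lt. fold (Lg n). rewrite Hkn. apply Rmult_lt_reg_r with PI; auto.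
        rewrite <- Hk. rewrite (Rmult_comm (Lg n)). apply Rmult_lt_compat_r; lra. }
      exists (d0 / sqrt lam, kn). split; [right; simpl; unfold kn in *; lia|].
      intros x Hx. rewrite Hrep by auto. simpl. unfold Sf. destruct (Rlt_dec 0 lam); [|lra].
      replace (INR kn * PI / Lg n) with (sqrt lam) by (rewrite Hkn, <- Hk; field; lra).
      unfold Rdiv. ring.
    + destruct (Rlt_dec lam 0) as [Hn'|Hn'].
      * exfalso. set (r := sqrt (- lam)) in *.
        assert (Hr : 0 < r) by (apply sqrt_lt_R0; lra).
        assert (exp (- r * Lg n) < exp (r * Lg n)) by (apply exp_increasing; nra).
        assert (2 * r <> 0) by lra.
        unfold Rdiv in HS. apply Rmult_integral in HS. destruct HS as [HS|HS]; [lra|].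
        apply Rinv_neq_0_compat in HS; auto.
      * lra.
Qed.

Definition Ld := flat_map (fun n => map (fun k => (n, k)) (seq 1 (ell n - 1))) (seq 0 N).
Definition gD (y : nat * nat) n x := if Nat.eqb n (fst y) then sin (INR (snd y) * PI / Lg n * x) else 0.
Definition peq (x y : nat * nat) : {x = y} + {x <> y}.
Proof. decide equality; apply Nat.eq_dec. Defined.

Lemma Ld_in n k : (n < N)%nat -> (1 <= k <= ell n - 1)%nat -> In (n, k) Ld.
Proof.
  intros Hn Hk. unfold Ld. apply in_flat_map. exists n. split; [apply in_seq; lia|].
  apply in_map_iff. exists k. split; auto. apply in_seq. lia.
Qed.

Lemma Ld_len : (length Ld + N = Ed)%nat.
Proof.
  unfold Ld, Ed.
  assert (G : forall m, (m <= N)%nat ->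
    (length (flat_map (fun n => map (fun k => (n, k)) (seq 1 (ell n - 1))) (seq 0 m)) + m = tot_len m ell)%nat).
  { induction m; intros Hm; [reflexivity|]. rewrite seq_S, flat_map_app, length_app. simpl.
    rewrite length_app, length_map, length_seq. simpl. specialize (IHm ltac:(lia)).
    pose proof (Hpos m ltac:(lia)). lia. }
  apply G. lia.
Qed.

Lemma lsum_count {X} (eqd : forall x y : X, {x = y} + {x <> y}) (L : list X) y0 c :
  lsum L (fun y => if eqd y y0 then c else 0) = INR (count_occ eqd L y0) * c.
Proof.
  induction L as [|z L IH]; simpl; [ring|]. rewrite IH.
  destruct (eqd z y0) as [->|Hne]; [rewrite S_INR; ring|ring].
Qed.

Lemma dir_span lam f df ddf : eigenfun N Lg (dirichlet_cond N Lg V) lam f df ddf -> lam < PI * PI ->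
  exists a : nat * nat -> R, forall n x, (n < N)%nat -> 0 <= x <= Lg n ->
    f n x = lsum Ld (fun y => a y * gD y n x).
Proof.
  intros Heig Hlam.
  destruct (choice_gen (0, 1%nat) N (fun n p => (fst p = 0 \/ (1 <= snd p /\ snd p <= ell n - 1)%nat) /\
    forall x, 0 <= x <= Lg n -> f n x = fst p * sin (INR (snd p) * PI / Lg n * x))) as [P HP].
  { intros n Hn. apply (dir_edge lam f df ddf Heig Hlam n Hn). }
  exists (fun y => if Nat.eqb (snd y) (snd (P (fst y))) then fst (P (fst y)) / INR (count_occ peq Ld y) else 0).
  intros n x Hn Hx. destruct (HP n Hn) as [Hc Hf].
  set (y0 := (n, snd (P n))). set (b := fst (P n)). set (sx := sin (INR (snd (P n)) * PI / Lg n * x)).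
  rewrite (lsum_ext Ld _ (fun y => if peq y y0 then b / INR (count_occ peq Ld y0) * sx else 0)).
  - rewrite lsum_count. rewrite Hf by auto. fold b sx. destruct Hc as [Hc|Hc].
    + fold b in Hc. rewrite Hc. unfold Rdiv. ring.
    + assert (Hin : In y0 Ld) by (apply Ld_in; auto).
      assert (Hcnt : (0 < count_occ peq Ld y0)%nat) by (apply count_occ_In; auto).
      field. apply not_0_INR. lia.
  - intros [n' k] Hy. unfold gD. cbn [fst snd].
    destruct (peq (n', k) y0) as [E|E].
    + assert (n' = n /\ k = snd (P n)) as [-> ->] by (unfold y0 in E; inversion E; auto).
      rewrite !Nat.eqb_refl. unfold b, sx, y0. ring.
    + destruct (Nat.eqb_spec n n') as [->|Hne]; [|ring].
      destruct (Nat.eqb_spec k (snd (P n'))) as [->|Hk]; [|ring].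
      exfalso. apply E. reflexivity.
Qed.

Lemma dir_notcount mu : mu < PI * PI -> ~ count_ge N Lg (dirichlet_cond N Lg V) mu Ed.
Proof.
  intros Hmu [lams [fs [dfs [ddfs [Heig Hind]]]]].
  destruct (choice_gen (fun _ => 0) Ed (fun i a => forall n x, (n < N)%nat -> 0 <= x <= Lg n ->
      fs i n x = lsum Ld (fun y => a y * gD y n x))) as [A HA].
  { intros i Hi. destruct (Heig i Hi) as [Hl He].
    apply (dir_span (lams i) (fs i) (dfs i) (ddfs i)); auto. lra. }
  destruct (span_dep peq Ld Ed fs gD A (fun n x => (n < N)%nat /\ 0 <= x <= Lg n)) as [c [[i [Hi Hci]] Hc]].
  - pose proof Ld_len. lia.
  - intros i n x Hi [Hn Hx]. apply HA; auto.
  - apply Hci. apply (Hind c); [intros n x Hn Hx; apply Hc; auto | exact Hi].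
Qed.

End Dir.


Theorem mainTheorem16 (N : nat) (ell : nat -> nat) (V : nat -> nat)
  (Hcyc : cycle_graph N V)
  (Hpos : forall n, (n < N)%nat -> (1 <= ell n)%nat)
  (Hgcd : gcd_all N ell = 1%nat)
  (Hodd : Nat.odd (tot_len N ell) = true) :
  exists lam_st lam_D : R,
    is_nth_eigenvalue N (fun n => INR (ell n)) (standard_cond N (fun n => INR (ell n)) V)
      (S (tot_len N ell)) lam_st /\
    is_nth_eigenvalue N (fun n => INR (ell n)) (dirichlet_cond N (fun n => INR (ell n)) V)
      (tot_len N ell) lam_D /\
    lam_st > lam_D.
Proof.
  assert (HN : (1 <= N)%nat) by (destruct Hcyc; auto).
  exists (lamstar N ell), (PI * PI). split; [|split].
  - split.
    + apply (std_count N ell V Hcyc Hpos).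
    + intros mu Hmu. apply (std_notcount N ell V Hcyc Hpos Hodd mu Hmu).
  - split.
    + apply (dir_count N ell V HN Hpos).
    + intros mu Hmu. apply (dir_notcount N ell V HN Hpos mu Hmu).
  - pose proof (Etot_pos N ell V Hcyc Hpos) as HE. assert (HP := PI_RGT_0).
    unfold lamstar. assert (PI < PI * (Etot N ell + 1) / Etot N ell).
    { apply Rmult_lt_reg_r with (Etot N ell); auto. unfold Rdiv.
      rewrite Rmult_assoc, Rinv_l by lra. nra. }
    apply Rlt_gt. apply Rmult_gt_0_lt_compat; lra.
Qed.
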